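(* Let $(W,\cdot,\iota)$ be any constraint domain. In the HyLL sequent calculus (which has no cut rule), for all sets $\Gamma$ and multisets $\Delta,\Delta'$ of judgements, propositions $A,C$ and worlds $u,w$: (1) if $\Gamma;\Delta\Rightarrow A@u$ and $\Gamma;\Delta',A@u\Rightarrow C@w$ are derivable, then $\Gamma;\Delta,\Delta'\Rightarrow C@w$ is derivable; (2) if $\Gamma;\cdot\Rightarrow A@u$ and $\Gamma,A@u;\Delta\Rightarrow C@w$ are derivable, then $\Gamma;\Delta\Rightarrow C@w$ is derivable.
   Context: HyLL (hybrid linear logic). A constraint domain is a monoid $(W,\cdot,\iota)$; its elements are called worlds. World expressions are built from elements of $W$, world variables $u,v,\dots$ and $\cdot$, and are considered up to the monoid equations. Terms are untyped first-order terms built from term variables $x,y,\dots$ and function symbols; world variables never occur in terms and term variables never occur in worlds. Propositions: $A,B ::= a\,\vec t \mid A\otimes B\mid \mathbf 1\mid A\multimap B\mid A\,\&\,B\mid \top\mid A\oplus B\mid \mathbf 0\mid\ !A\mid \forall x.A\mid \exists x.A\mid (A\ \mathsf{at}\ w)\mid \downarrow u.A\mid \forall u.A\mid\exists u.A$, where $a\,\vec t$ is an atomic predicate applied to terms, $x$ a term variable, $u$ a world variable (bound in $\downarrow u.A,\forall u.A,\exists u.A$), and $w$ a world expression. $\alpha$ ranges over variables of either kind, $\tau$ over terms or worlds accordingly, $[\tau/\alpha]A$ is capture-avoiding substitution; propositions are taken up to $\alpha$-conversion. A judgement is $A@w$. A sequent is $\Gamma;\Delta\Rightarrow C@w$ with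 $\Gamma$ a set of judgements (unrestricted context) and $\Delta$ a multiset of judgements (linear context). Derivable sequents are those generated by the rules (premises $\Longrightarrow$ conclusion): init: $\Gamma; a\,\vec t@u\Rightarrow a\,\vec t@u$. copy: $\Gamma,A@u;\Delta,A@u\Rightarrow C@w \Longrightarrow \Gamma,A@u;\Delta\Rightarrow C@w$. $\otimes$R: $\Gamma;\Delta\Rightarrow A@w$ and $\Gamma;\Delta'\Rightarrow B@w\Longrightarrow\Gamma;\Delta,\Delta'\Rightarrow A\otimes B@w$. $\otimes$L: $\Gamma;\Delta,A@u,B@u\Rightarrow C@w\Longrightarrow\Gamma;\Delta,A\otimes B@u\Rightarrow C@w$. $\mathbf1$R: $\Gamma;\cdot\Rightarrow \mathbf 1@w$. $\mathbf 1$L: $\Gamma;\Delta\Rightarrow C@w\Longrightarrow\Gamma;\Delta,\mathbf 1@u\Rightarrow C@w$. $\multimap$R: $\Gamma;\Delta,A@w\Rightarrow B@w\Longrightarrow\Gamma;\Delta\Rightarrow A\multimap B@w$. $\multimap$L: $\Gamma;\Delta\Rightarrow A@u$ and $\Gamma;\Delta',B@u\Rightarrow C@w\Longrightarrow\Gamma;\Delta,\Delta',A\multimap B@u\Rightarrow C@w$. $\top$R: $\Gamma;\Delta\Rightarrow\top@w$. $\mathbf 0$L: $\Gamma;\Delta,\mathbf 0@u\Rightarrow C@w$. $\&$R: $\Gamma;\Delta\Rightarrow A@w$ and $\Gamma;\Delta\Rightarrow B@w\Longrightarrow\Gamma;\Delta\Rightarrow A\&B@w$. $\&$L$_i$ ($i=1,2$):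 $\Gamma;\Delta,A_i@u\Rightarrow C@w\Longrightarrow\Gamma;\Delta,A_1\&A_2@u\Rightarrow C@w$. $\oplus$R$_i$: $\Gamma;\Delta\Rightarrow A_i@w\Longrightarrow\Gamma;\Delta\Rightarrow A_1\oplus A_2@w$. $\oplus$L: $\Gamma;\Delta,A@u\Rightarrow C@w$ and $\Gamma;\Delta,B@u\Rightarrow C@w\Longrightarrow\Gamma;\Delta,A\oplus B@u\Rightarrow C@w$. $\forall$R: $\Gamma;\Delta\Rightarrow A@w\Longrightarrow\Gamma;\Delta\Rightarrow\forall\alpha.A@w$ ($\alpha$ fresh for the conclusion). $\forall$L: $\Gamma;\Delta,[\tau/\alpha]A@u\Rightarrow C@w\Longrightarrow\Gamma;\Delta,\forall\alpha.A@u\Rightarrow C@w$. $\exists$R: $\Gamma;\Delta\Rightarrow[\tau/\alpha]A@w\Longrightarrow\Gamma;\Delta\Rightarrow\exists\alpha.A@w$. $\exists$L: $\Gamma;\Delta,A@u\Rightarrow C@w\Longrightarrow\Gamma;\Delta,\exists\alpha.A@u\Rightarrow C@w$ ($\alpha$ fresh for the conclusion). $!$R: $\Gamma;\cdot\Rightarrow A@w\Longrightarrow\Gamma;\cdot\Rightarrow\ !A@w$. $!$L: $\Gamma,A@u;\Delta\Rightarrow C@w\Longrightarrow\Gamma;\Delta,!A@u\Rightarrow C@w$. $\mathsf{at}$R: $\Gamma;\Delta\Rightarrow A@u\Longrightarrow\Gamma;\Delta\Rightarrow(A\ \mathsf{at}\ u)@v$. $\mathsf{at}$L: $\Gamma;\Delta,A@u\Rightarrow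 C@w\Longrightarrow\Gamma;\Delta,(A\ \mathsf{at}\ u)@v\Rightarrow C@w$. $\downarrow$R: $\Gamma;\Delta\Rightarrow[w/u]A@w\Longrightarrow\Gamma;\Delta\Rightarrow\downarrow u.A@w$. $\downarrow$L: $\Gamma;\Delta,[v/u]A@v\Rightarrow C@w\Longrightarrow\Gamma;\Delta,\downarrow u.A@v\Rightarrow C@w$. *)

(* Defs.v *)
From Stdlib Require Import List Permutation.
Import ListNotations.
Set Implicit Arguments.

Record cdomain := {
  wcar :> Type;
  wmul : wcar -> wcar -> wcar;
  wunit : wcar;
  wassoc : forall a b c, wmul a (wmul b c) = wmul (wmul a b) c;
  wunitl : forall a, wmul wunit a = a;
  wunitr : forall a, wmul a wunit = a }.

Section HyLL.
Context (D : cdomain) (Fs Ps : Type).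
(* Fs : function symbols, Ps : predicate symbols *)

(* Untyped first-order terms; term variables are de Bruijn indices. *)
Inductive tm : Type :=
| TVar : nat -> tm
| TApp : Fs -> list tm -> tm.

Fixpoint tsubst (s : nat -> tm) (t : tm) : tm :=
  match t with
  | TVar n => s n
  | TApp f ts => TApp f (map (tsubst s) ts)
  end.

Definition tshift (t : tm) : tm := tsubst (fun n => TVar (S n)) t.
Definition tup (s : nat -> tm) : nat -> tm :=
  fun n => match n with 0 => TVar 0 | S m => tshift (s m) end.
Definition tsingle (t : tm) : nat -> tm :=
  fun n => match n with 0 => t | S m => TVar m end.

Inductive wexp : Type :=
| WC : wcar D -> wexp
| WV : nat -> wexp
| WM : wexp -> wexp -> wexp.

Fixpoint wsubst (s : nat -> wexp) (e : wexp) : wexp :=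
  match e with
  | WC a => WC a
  | WV n => s n
  | WM e1 e2 => WM (wsubst s e1) (wsubst s e2)
  end.

Definition wshift (e : wexp) : wexp := wsubst (fun n => WV (S n)) e.
Definition wup (s : nat -> wexp) : nat -> wexp :=
  fun n => match n with 0 => WV 0 | S m => wshift (s m) end.
Definition wsingle (e : wexp) : nat -> wexp :=
  fun n => match n with 0 => e | S m => WV m end.

Inductive weq : wexp -> wexp -> Prop :=
| weq_refl : forall e, weq e e
| weq_sym : forall e1 e2, weq e1 e2 -> weq e2 e1
| weq_trans : forall e1 e2 e3, weq e1 e2 -> weq e2 e3 -> weq e1 e3
| weq_cong : forall e1 e1' e2 e2', weq e1 e1' -> weq e2 e2' ->
    weq (WM e1 e2) (WM e1' e2')
| weq_assoc : forall e1 e2 e3, weq (WM e1 (WM e2 e3)) (WM (WM e1 e2) e3)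
| weq_unitl : forall e, weq (WM (WC (wunit D)) e) e
| weq_unitr : forall e, weq (WM e (WC (wunit D))) e
| weq_const : forall a b, weq (WM (WC a) (WC b)) (WC (wmul D a b)).

(* Propositions.  AllT/ExT bind a term variable; Down/AllW/ExW bind a
   world variable (de Bruijn, so alpha-equivalent propositions are equal). *)
Inductive prop : Type :=
| Atom : Ps -> list tm -> prop
| Tensor : prop -> prop -> prop
| One : prop
| Lolli : prop -> prop -> prop
| With : prop -> prop -> prop
| Top : prop
| Plus : prop -> prop -> prop
| Zero : prop
| Bang : prop -> prop
| AllT : prop -> prop
| ExT : prop -> prop
| At : prop -> wexp -> prop
| Down : prop -> prop
| AllW : prop -> prop
| ExW : prop -> prop.

Fixpoint psubt (s : nat -> tm) (A : prop) : prop :=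
  match A with
  | Atom p ts => Atom p (map (tsubst s) ts)
  | Tensor A B => Tensor (psubt s A) (psubt s B)
  | One => One
  | Lolli A B => Lolli (psubt s A) (psubt s B)
  | With A B => With (psubt s A) (psubt s B)
  | Top => Top
  | Plus A B => Plus (psubt s A) (psubt s B)
  | Zero => Zero
  | Bang A => Bang (psubt s A)
  | AllT A => AllT (psubt (tup s) A)
  | ExT A => ExT (psubt (tup s) A)
  | At A w => At (psubt s A) w
  | Down A => Down (psubt s A)
  | AllW A => AllW (psubt s A)
  | ExW A => ExW (psubt s A)
  end.

Fixpoint psubw (s : nat -> wexp) (A : prop) : prop :=
  match A with
  | Atom p ts => Atom p ts
  | Tensor A B => Tensor (psubw s A) (psubw s B)
  | One => One
  | Lolli A B => Lolli (psubw s A) (psubw s B)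
  | With A B => With (psubw s A) (psubw s B)
  | Top => Top
  | Plus A B => Plus (psubw s A) (psubw s B)
  | Zero => Zero
  | Bang A => Bang (psubw s A)
  | AllT A => AllT (psubw s A)
  | ExT A => ExT (psubw s A)
  | At A w => At (psubw s A) (wsubst s w)
  | Down A => Down (psubw (wup s) A)
  | AllW A => AllW (psubw (wup s) A)
  | ExW A => ExW (psubw (wup s) A)
  end.

Fixpoint peq (A B : prop) : Prop :=
  match A, B with
  | Atom p ts, Atom q ss => p = q /\ ts = ss
  | Tensor A1 A2, Tensor B1 B2 => peq A1 B1 /\ peq A2 B2
  | One, One => True
  | Lolli A1 A2, Lolli B1 B2 => peq A1 B1 /\ peq A2 B2
  | With A1 A2, With B1 B2 => peq A1 B1 /\ peq A2 B2
  | Top, Top => True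
  | Plus A1 A2, Plus B1 B2 => peq A1 B1 /\ peq A2 B2
  | Zero, Zero => True
  | Bang A1, Bang B1 => peq A1 B1
  | AllT A1, AllT B1 => peq A1 B1
  | ExT A1, ExT B1 => peq A1 B1
  | At A1 w1, At B1 v1 => peq A1 B1 /\ weq w1 v1
  | Down A1, Down B1 => peq A1 B1
  | AllW A1, AllW B1 => peq A1 B1
  | ExW A1, ExW B1 => peq A1 B1
  | _, _ => False
  end.

Definition judg : Type := (prop * wexp)%type.
Definition jeq (j k : judg) : Prop := peq (fst j) (fst k) /\ weq (snd j) (snd k).

(* Unrestricted contexts are sets: lists compared as sets (modulo jeq). *)
Definition set_eq (G G' : list judg) : Prop :=
  (forall j, In j G -> exists k, In k G' /\ jeq j k) /\
  (forall k, In k G' -> exists j, In j G /\ jeq j k).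
(* Linear contexts are multisets: lists compared up to permutation (modulo jeq). *)
Definition ms_eq (L L' : list judg) : Prop :=
  exists L'', Permutation L L'' /\ Forall2 jeq L'' L'.

(* Shifting contexts when going under a binder (freshness of the eigenvariable). *)
Definition jshiftt (j : judg) : judg := (psubt (fun n => TVar (S n)) (fst j), snd j).
Definition jshiftw (j : judg) : judg := (psubw (fun n => WV (S n)) (fst j), wshift (snd j)).

Inductive deriv : list judg -> list judg -> prop -> wexp -> Prop :=
| d_conv : forall G L C w G' L' C' w',
    deriv G L C w -> set_eq G G' -> ms_eq L L' -> peq C C' -> weq w w' ->
    deriv G' L' C' w'
| d_init : forall G p ts u, deriv G [(Atom p ts, u)] (Atom p ts) u
| d_copy : forall G L A u C w,
    In (A, u) G -> deriv G ((A, u) :: L) C w -> deriv G L C w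
| d_tensorR : forall G L L' A B w,
    deriv G L A w -> deriv G L' B w -> deriv G (L ++ L') (Tensor A B) w
| d_tensorL : forall G L A B u C w,
    deriv G ((A, u) :: (B, u) :: L) C w -> deriv G ((Tensor A B, u) :: L) C w
| d_oneR : forall G w, deriv G [] One w
| d_oneL : forall G L u C w, deriv G L C w -> deriv G ((One, u) :: L) C w
| d_lolliR : forall G L A B w,
    deriv G ((A, w) :: L) B w -> deriv G L (Lolli A B) w
| d_lolliL : forall G L L' A B u C w,
    deriv G L A u -> deriv G ((B, u) :: L') C w ->
    deriv G ((Lolli A B, u) :: L ++ L') C w
| d_topR : forall G L w, deriv G L Top w
| d_zeroL : forall G L u C w, deriv G ((Zero, u) :: L) C w
| d_withR : forall G L A B w,
    deriv G L A w -> deriv G L B w -> deriv G L (With A B) w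
| d_withL1 : forall G L A B u C w,
    deriv G ((A, u) :: L) C w -> deriv G ((With A B, u) :: L) C w
| d_withL2 : forall G L A B u C w,
    deriv G ((B, u) :: L) C w -> deriv G ((With A B, u) :: L) C w
| d_plusR1 : forall G L A B w, deriv G L A w -> deriv G L (Plus A B) w
| d_plusR2 : forall G L A B w, deriv G L B w -> deriv G L (Plus A B) w
| d_plusL : forall G L A B u C w,
    deriv G ((A, u) :: L) C w -> deriv G ((B, u) :: L) C w ->
    deriv G ((Plus A B, u) :: L) C w
| d_allTR : forall G L A w,
    deriv (map jshiftt G) (map jshiftt L) A w -> deriv G L (AllT A) w
| d_allTL : forall G L A t u C w,
    deriv G ((psubt (tsingle t) A, u) :: L) C w -> deriv G ((AllT A, u) :: L) C w
| d_exTR : forall G L A t w,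
    deriv G L (psubt (tsingle t) A) w -> deriv G L (ExT A) w
| d_exTL : forall G L A u C w,
    deriv (map jshiftt G) ((A, u) :: map jshiftt L)
          (psubt (fun n => TVar (S n)) C) w ->
    deriv G ((ExT A, u) :: L) C w
| d_allWR : forall G L A w,
    deriv (map jshiftw G) (map jshiftw L) A (wshift w) -> deriv G L (AllW A) w
| d_allWL : forall G L A v u C w,
    deriv G ((psubw (wsingle v) A, u) :: L) C w -> deriv G ((AllW A, u) :: L) C w
| d_exWR : forall G L A v w,
    deriv G L (psubw (wsingle v) A) w -> deriv G L (ExW A) w
| d_exWL : forall G L A u C w,
    deriv (map jshiftw G) ((A, wshift u) :: map jshiftw L)
          (psubw (fun n => WV (S n)) C) (wshift w) ->
    deriv G ((ExW A, u) :: L) C w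
| d_bangR : forall G A w, deriv G [] A w -> deriv G [] (Bang A) w
| d_bangL : forall G L A u C w,
    deriv ((A, u) :: G) L C w -> deriv G ((Bang A, u) :: L) C w
| d_atR : forall G L A u v, deriv G L A u -> deriv G L (At A u) v
| d_atL : forall G L A u v C w,
    deriv G ((A, u) :: L) C w -> deriv G ((At A u, v) :: L) C w
| d_downR : forall G L A w,
    deriv G L (psubw (wsingle w) A) w -> deriv G L (Down A) w
| d_downL : forall G L A v C w,
    deriv G ((psubw (wsingle v) A, v) :: L) C w -> deriv G ((Down A, v) :: L) C w.

End HyLL.

(* Main.v *)
Require Import Defs.
From Stdlib Require Import List Permutation Lia Arith FunctionalExtensionality.
Import ListNotations.
Set Implicit Arguments.

Arguments TVar {Fs}. Arguments TApp {Fs}.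
Arguments WC {D}. Arguments WV {D}. Arguments WM {D}.
Arguments Atom {D Fs Ps}. Arguments Tensor {D Fs Ps}. Arguments One {D Fs Ps}.
Arguments Lolli {D Fs Ps}. Arguments With {D Fs Ps}. Arguments Top {D Fs Ps}.
Arguments Plus {D Fs Ps}. Arguments Zero {D Fs Ps}. Arguments Bang {D Fs Ps}.
Arguments AllT {D Fs Ps}. Arguments ExT {D Fs Ps}. Arguments At {D Fs Ps}.
Arguments Down {D Fs Ps}. Arguments AllW {D Fs Ps}. Arguments ExW {D Fs Ps}.

Section HyLLCut.
Context (D : cdomain) (Fs Ps : Type).
Local Notation tm := (tm Fs).
Local Notation wexp := (wexp D).
Local Notation prop := (prop D Fs Ps).
Local Notation judg := (judg D Fs Ps).

Fixpoint tm_ind' (P : tm -> Prop) (HV : forall n, P (TVar n))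
  (HA : forall f ts, Forall P ts -> P (TApp f ts)) (t : tm) : P t :=
  match t with
  | TVar n => HV n
  | TApp f ts => HA f ts ((fix go (l : list tm) : Forall P l :=
       match l with [] => Forall_nil _ | x :: l => Forall_cons _ (tm_ind' HV HA x) (go l) end) ts)
  end.

Lemma tsubst_comp : forall t (s r : nat -> tm),
  tsubst s (tsubst r t) = tsubst (fun n => tsubst s (r n)) t.
Proof.
  intros t; induction t using tm_ind'; intros; simpl; auto.
  f_equal. rewrite map_map. induction H; simpl; f_equal; auto.
Qed.

Lemma tsubst_id : forall t : tm, tsubst (fun n => TVar n) t = t.
Proof.
  intros t; induction t using tm_ind'; simpl; auto.
  f_equal. induction H; simpl; f_equal; auto.
Qed.

Lemma tup_comp : forall (s r : nat -> tm),
  tup (fun n => tsubst s (r n)) = (fun n => tsubst (tup s) (tup r n)).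
Proof.
  intros; apply functional_extensionality; intros [|m]; simpl; auto.
  unfold tshift; rewrite !tsubst_comp; reflexivity.
Qed.

Lemma tup_id : tup (fun n => TVar n) = (fun n => @TVar Fs n).
Proof. apply functional_extensionality; intros [|m]; reflexivity. Qed.

Lemma psubt_comp : forall (A : prop) s r,
  psubt s (psubt r A) = psubt (fun n => tsubst s (r n)) A.
Proof.
  induction A; intros; simpl; f_equal; auto; try (rewrite IHA; rewrite tup_comp; auto).
  rewrite map_map; apply map_ext; intros; apply tsubst_comp.
Qed.

Lemma psubt_id : forall (A : prop), psubt (fun n => TVar n) A = A.
Proof.
  induction A; simpl; f_equal; auto; try (rewrite tup_id; auto).
  rewrite <- (map_id l) at 2; apply map_ext; intros; apply tsubst_id.
Qed.

Lemma wsubst_comp : forall (e : wexp) s r,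
  wsubst s (wsubst r e) = wsubst (fun n => wsubst s (r n)) e.
Proof. induction e; intros; simpl; f_equal; auto. Qed.

Lemma wsubst_id : forall (e : wexp), wsubst (fun n => WV n) e = e.
Proof. induction e; simpl; f_equal; auto. Qed.

Lemma wup_comp : forall (s r : nat -> wexp),
  wup (fun n => wsubst s (r n)) = (fun n => wsubst (wup s) (wup r n)).
Proof.
  intros; apply functional_extensionality; intros [|m]; simpl; auto.
  unfold wshift; rewrite !wsubst_comp; reflexivity.
Qed.

Lemma wup_id : wup (fun n => WV n) = (fun n => @WV D n).
Proof. apply functional_extensionality; intros [|m]; reflexivity. Qed.

Lemma psubw_comp : forall (A : prop) s r,
  psubw s (psubw r A) = psubw (fun n => wsubst s (r n)) A.
Proof.
  induction A; intros; simpl; f_equal; auto; try (rewrite IHA; rewrite wup_comp; auto).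
  apply wsubst_comp.
Qed.

Lemma psubw_id : forall (A : prop), psubw (fun n => WV n) A = A.
Proof.
  induction A; simpl; f_equal; auto; try (rewrite wup_id; auto). apply wsubst_id.
Qed.

Lemma psubt_psubw : forall (A : prop) s r, psubt s (psubw r A) = psubw r (psubt s A).
Proof. induction A; intros; simpl; f_equal; auto. Qed.

Local Notation tsh := (fun n : nat => @TVar Fs (S n)).
Local Notation wsh := (fun n : nat => @WV D (S n)).

Lemma psubt_up_sh : forall (A : prop) s, psubt (tup s) (psubt tsh A) = psubt tsh (psubt s A).
Proof. intros; rewrite !psubt_comp; reflexivity. Qed.

Lemma psubt_single : forall (A : prop) s t,
  psubt s (psubt (tsingle t) A) = psubt (tsingle (tsubst s t)) (psubt (tup s) A).
Proof.
  intros; rewrite !psubt_comp; f_equal; apply functional_extensionality; intros [|m]; simpl; auto.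
  unfold tshift; rewrite tsubst_comp; simpl; rewrite tsubst_id; auto.
Qed.

Lemma psubt_single_sh : forall (A : prop) t, psubt (tsingle t) (psubt tsh A) = A.
Proof. intros; rewrite psubt_comp; apply psubt_id. Qed.

Lemma wsubst_up_sh : forall (e : wexp) s, wsubst (wup s) (wshift e) = wshift (wsubst s e).
Proof. intros; unfold wshift; rewrite !wsubst_comp; reflexivity. Qed.

Lemma psubw_up_sh : forall (A : prop) s, psubw (wup s) (psubw wsh A) = psubw wsh (psubw s A).
Proof. intros; rewrite !psubw_comp; reflexivity. Qed.

Lemma psubw_single : forall (A : prop) s v,
  psubw s (psubw (wsingle v) A) = psubw (wsingle (wsubst s v)) (psubw (wup s) A).
Proof.
  intros; rewrite !psubw_comp; f_equal; apply functional_extensionality; intros [|m]; simpl; auto.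
  unfold wshift; rewrite wsubst_comp; simpl; rewrite wsubst_id; auto.
Qed.

Lemma psubw_single_sh : forall (A : prop) v, psubw (wsingle v) (psubw wsh A) = A.
Proof. intros; rewrite psubw_comp; apply psubw_id. Qed.

Lemma wsubst_single_sh : forall (e : wexp) v, wsubst (wsingle v) (wshift e) = e.
Proof. intros; unfold wshift; rewrite wsubst_comp; apply wsubst_id. Qed.

Lemma weq_subst : forall (e1 e2 : wexp) s, weq e1 e2 -> weq (wsubst s e1) (wsubst s e2).
Proof. intros e1 e2 s H; induction H; simpl; eauto using weq. Qed.

Lemma weq_subst2 : forall (e : wexp) s s', (forall n, weq (s n) (s' n)) ->
  weq (wsubst s e) (wsubst s' e).
Proof. induction e; intros; simpl; eauto using weq. Qed.

Lemma wup_weq : forall (s s' : nat -> wexp), (forall n, weq (s n) (s' n)) ->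
  forall n, weq (wup s n) (wup s' n).
Proof. intros s s' H [|n]; simpl; [constructor|]. apply weq_subst; auto. Qed.

Lemma peq_refl : forall (A : prop), peq A A.
Proof. induction A; simpl; repeat split; auto; constructor. Qed.

Lemma peq_sym : forall (A B : prop), peq A B -> peq B A.
Proof. induction A; destruct B; simpl; intuition; subst; auto using weq_sym. Qed.

Lemma peq_trans : forall (A B C : prop), peq A B -> peq B C -> peq A C.
Proof.
  induction A; destruct B; destruct C; simpl; intuition; subst; eauto using weq_trans.
Qed.


Lemma peq_psubw : forall (A B : prop) s s', peq A B -> (forall n, weq (s n) (s' n)) ->
  peq (psubw s A) (psubw s' B).
Proof.
  induction A; destruct B; simpl; intros; intuition; subst; eauto using wup_weq.
  eapply weq_trans; [apply weq_subst; eauto| apply weq_subst2; auto].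
Qed.

Lemma peq_psubt : forall (A B : prop) s, peq A B -> peq (psubt s A) (psubt s B).
Proof. induction A; destruct B; simpl; intros; intuition; subst; eauto. Qed.

Fixpoint size (A : prop) : nat :=
  match A with
  | Atom _ _ => 1 | One => 1 | Top => 1 | Zero => 1
  | Tensor A B | Lolli A B | With A B | Plus A B => S (size A + size B)
  | Bang A | AllT A | ExT A | At A _ | Down A | AllW A | ExW A => S (size A)
  end.

Lemma size_psubt : forall (A : prop) s, size (psubt s A) = size A.
Proof. induction A; intros; simpl; auto. Qed.
Lemma size_psubw : forall (A : prop) s, size (psubw s A) = size A.
Proof. induction A; intros; simpl; auto. Qed.
Lemma size_peq : forall (A B : prop), peq A B -> size A = size B.
Proof. induction A; destruct B; simpl; intuition. Qed.
Lemma size_pos : forall (A : prop), 1 <= size A.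
Proof. destruct A; simpl; lia. Qed.

Lemma jeq_refl : forall (j : judg), jeq j j.
Proof. intros [A w]; split; simpl; [apply peq_refl|constructor]. Qed.
Lemma jeq_sym : forall (j k : judg), jeq j k -> jeq k j.
Proof. intros [A w] [B v] [H1 H2]; split; simpl in *; [apply peq_sym|apply weq_sym]; auto. Qed.
Lemma jeq_trans : forall (j k l : judg), jeq j k -> jeq k l -> jeq j l.
Proof.
  intros [A w] [B v] [C x] [H1 H2] [H3 H4]; split; simpl in *;
  [eapply peq_trans|eapply weq_trans]; eauto.
Qed.

Definition jsubt (s : nat -> tm) (j : judg) : judg := (psubt s (fst j), snd j).
Definition jsubw (s : nat -> wexp) (j : judg) : judg := (psubw s (fst j), wsubst s (snd j)).
Arguments jsubt s j /.
Arguments jsubw s j /.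

Lemma jeq_jsubt : forall s (j k : judg), jeq j k -> jeq (jsubt s j) (jsubt s k).
Proof. intros s [A w] [B v] [H1 H2]; split; simpl in *; auto using peq_psubt. Qed.
Lemma jeq_jsubw : forall s (j k : judg), jeq j k -> jeq (jsubw s j) (jsubw s k).
Proof.
  intros s [A w] [B v] [H1 H2]; split; simpl in *;
  auto using peq_psubw, weq_subst, weq_refl.
Qed.

Lemma map_jsubt_shiftt : forall s (G : list judg),
  map (jsubt (tup s)) (map (@jshiftt D Fs Ps) G) = map (@jshiftt D Fs Ps) (map (jsubt s) G).
Proof.
  intros; rewrite !map_map; apply map_ext; intros [A w];
  unfold jsubt, jshiftt; simpl; f_equal; apply psubt_up_sh.
Qed.
Lemma map_jsubt_shiftw : forall s (G : list judg),
  map (jsubt s) (map (@jshiftw D Fs Ps) G) = map (@jshiftw D Fs Ps) (map (jsubt s) G).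
Proof.
  intros; rewrite !map_map; apply map_ext; intros [A w];
  unfold jsubt, jshiftw; simpl; f_equal; apply psubt_psubw.
Qed.
Lemma map_jsubw_shiftt : forall s (G : list judg),
  map (jsubw s) (map (@jshiftt D Fs Ps) G) = map (@jshiftt D Fs Ps) (map (jsubw s) G).
Proof.
  intros; rewrite !map_map; apply map_ext; intros [A w];
  unfold jsubw, jshiftt; simpl; f_equal; symmetry; apply psubt_psubw.
Qed.
Lemma map_jsubw_shiftw : forall s (G : list judg),
  map (jsubw (wup s)) (map (@jshiftw D Fs Ps) G) = map (@jshiftw D Fs Ps) (map (jsubw s) G).
Proof.
  intros; rewrite !map_map; apply map_ext; intros [A w];
  unfold jsubw, jshiftw; simpl; f_equal; [apply psubw_up_sh| apply wsubst_up_sh].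
Qed.
Lemma map_jsubt_single_sh : forall t (G : list judg),
  map (jsubt (tsingle t)) (map (@jshiftt D Fs Ps) G) = G.
Proof.
  intros; rewrite map_map; rewrite <- (map_id G) at 2; apply map_ext; intros [A w];
  unfold jsubt, jshiftt; simpl; f_equal; apply psubt_single_sh.
Qed.
Lemma map_jsubw_single_sh : forall v (G : list judg),
  map (jsubw (wsingle v)) (map (@jshiftw D Fs Ps) G) = G.
Proof.
  intros; rewrite map_map; rewrite <- (map_id G) at 2; apply map_ext; intros [A w];
  unfold jsubw, jshiftw; simpl; f_equal; [apply psubw_single_sh|apply wsubst_single_sh].
Qed.

Definition sub (G G' : list judg) : Prop := forall j, In j G -> exists k, In k G' /\ jeq j k.

Lemma sub_refl : forall G, sub G G.
Proof. intros G j H; exists j; split; auto using jeq_refl. Qed.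
Lemma sub_trans : forall G1 G2 G3, sub G1 G2 -> sub G2 G3 -> sub G1 G3.
Proof.
  intros G1 G2 G3 H1 H2 j Hj; destruct (H1 j Hj) as [k [Hk Hjk]];
  destruct (H2 k Hk) as [l [Hl Hkl]]; exists l; split; eauto using jeq_trans.
Qed.
Lemma set_eq_sub : forall G G', set_eq G G' -> sub G G'.
Proof. intros G G' [H _]; exact H. Qed.
Lemma set_eq_sub' : forall G G', set_eq G G' -> sub G' G.
Proof.
  intros G G' [_ H] j Hj; destruct (H j Hj) as [k [Hk Hjk]]; exists k; split; auto using jeq_sym.
Qed.
Lemma set_eq_refl : forall G : list judg, set_eq G G.
Proof. intros; split; intros j Hj; exists j; split; auto using jeq_refl. Qed.
Lemma sub_cons : forall j G G', sub G G' -> sub (j :: G) (j :: G').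
Proof.
  intros j G G' H k [<-|Hk]; [exists j; split; simpl; auto using jeq_refl|].
  destruct (H k Hk) as [l [Hl Hkl]]; exists l; split; simpl; auto.
Qed.
Lemma sub_map : forall (f : judg -> judg), (forall j k, jeq j k -> jeq (f j) (f k)) ->
  forall G G', sub G G' -> sub (map f G) (map f G').
Proof.
  intros f Hf G G' H j Hj; apply in_map_iff in Hj; destruct Hj as [j0 [<- Hj0]].
  destruct (H j0 Hj0) as [k [Hk Hjk]]; exists (f k); split; auto using in_map.
Qed.
Lemma set_eq_map : forall (f : judg -> judg), (forall j k, jeq j k -> jeq (f j) (f k)) ->
  forall G G', set_eq G G' -> set_eq (map f G) (map f G').
Proof.
  intros f Hf G G' [H1 H2]; split.
  - apply sub_map; auto.
  - intros k Hk; apply in_map_iff in Hk; destruct Hk as [k0 [<- Hk0]].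
    destruct (H2 k0 Hk0) as [j [Hj Hjk]]; exists (f j); split; auto using in_map.
Qed.

Lemma Forall2_jeq_refl : forall L : list judg, Forall2 (@jeq D Fs Ps) L L.
Proof. induction L; constructor; auto using jeq_refl. Qed.
Lemma Forall2_jeq_sym : forall L L' : list judg, Forall2 (@jeq D Fs Ps) L L' -> Forall2 (@jeq D Fs Ps) L' L.
Proof. induction 1; constructor; auto using jeq_sym. Qed.
Lemma Forall2_jeq_trans : forall L1 L2 L3 : list judg, Forall2 (@jeq D Fs Ps) L1 L2 ->
  Forall2 (@jeq D Fs Ps) L2 L3 -> Forall2 (@jeq D Fs Ps) L1 L3.
Proof.
  intros L1 L2 L3 H; revert L3; induction H; intros L3 H3; inversion H3; subst;
  constructor; eauto using jeq_trans.
Qed.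

Lemma ms_refl : forall L : list judg, ms_eq L L.
Proof. intros; exists L; split; auto using Forall2_jeq_refl. Qed.
Lemma ms_perm : forall L L' : list judg, Permutation L L' -> ms_eq L L'.
Proof. intros; exists L'; split; auto using Forall2_jeq_refl. Qed.
Lemma ms_sym : forall L L' : list judg, ms_eq L L' -> ms_eq L' L.
Proof.
  intros L L' [M [HP HF]].
  destruct (Permutation_Forall2 (Permutation_sym HP) HF) as [L2 [HP2 HF2]].
  exists L2; split; auto using Forall2_jeq_sym.
Qed.
Lemma ms_trans : forall L1 L2 L3 : list judg, ms_eq L1 L2 -> ms_eq L2 L3 -> ms_eq L1 L3.
Proof.
  intros L1 L2 L3 [M1 [HP1 HF1]] [M2 [HP2 HF2]].
  apply Forall2_jeq_sym in HF1.
  destruct (Permutation_Forall2 HP2 HF1) as [M1' [HP HF]].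
  exists M1'; split; [eapply Permutation_trans; eauto|].
  eapply Forall2_jeq_trans; eauto using Forall2_jeq_sym.
Qed.
Lemma ms_cons : forall (a b : judg) l l', jeq a b -> ms_eq l l' -> ms_eq (a :: l) (b :: l').
Proof. intros a b l l' H [M [HP HF]]; exists (a :: M); split; auto. Qed.
Lemma ms_app : forall a a' b b' : list judg, ms_eq a a' -> ms_eq b b' -> ms_eq (a ++ b) (a' ++ b').
Proof.
  intros a a' b b' [M [HP HF]] [N [HP' HF']]; exists (M ++ N); split;
  auto using Permutation_app, Forall2_app.
Qed.
Lemma ms_nil_cons : forall (x : judg) l, ms_eq [] (x :: l) -> False.
Proof.
  intros x l [M [HP HF]]; apply Permutation_nil in HP; subst; inversion HF.
Qed.
Lemma ms_nil : forall (l : list judg), ms_eq [] l -> l = [].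
Proof.
  intros l [M [HP HF]]; apply Permutation_nil in HP; subst; inversion HF; auto.
Qed.
Lemma ms_map : forall (f : judg -> judg), (forall j k, jeq j k -> jeq (f j) (f k)) ->
  forall L L', ms_eq L L' -> ms_eq (map f L) (map f L').
Proof.
  intros f Hf L L' [M [HP HF]]; exists (map f M); split; [apply Permutation_map; auto|].
  clear HP; induction HF; simpl; constructor; auto.
Qed.

Lemma ms_split : forall (L : list judg) b l', ms_eq L (b :: l') ->
  exists c M, Permutation L (c :: M) /\ jeq c b /\ ms_eq M l'.
Proof.
  intros L b l' [N [HP HF]]; inversion HF; subst.
  exists x, l; split; auto; split; auto; exists l; split; auto.
Qed.

Lemma perm_cons_split : forall (a c : judg) l M, Permutation (a :: l) (c :: M) ->
  (a = c /\ Permutation l M) \/ (exists l3, Permutation l (c :: l3) /\ Permutation M (a :: l3)).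
Proof.
  intros a c l M HP.
  assert (Hin : In c (a :: l)) by (apply (Permutation_in c (Permutation_sym HP)); simpl; auto).
  destruct Hin as [<-|Hin].
  - left; split; auto; eapply Permutation_cons_inv; eauto.
  - right. apply in_split in Hin; destruct Hin as [x [y ->]].
    exists (x ++ y); split.
    + apply Permutation_sym, Permutation_middle.
    + apply Permutation_cons_inv with c.
      eapply Permutation_trans; [apply Permutation_sym, HP|].
      change (a :: x ++ c :: y) with ((a :: x) ++ c :: y).
      eapply Permutation_trans; [apply Permutation_sym, Permutation_middle|]. simpl; auto.
Qed.

Lemma split_head : forall (a b : judg) l l', ms_eq (a :: l) (b :: l') ->
  (jeq a b /\ ms_eq l l') \/ (exists l3, ms_eq l (b :: l3) /\ ms_eq (a :: l3) l').
Proof.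
  intros a b l l' H; destruct (ms_split H) as [c [M [HP [Hcb HM]]]].
  destruct (perm_cons_split HP) as [[<- HP']|[l3 [H1 H2]]].
  - left; split; auto; eapply ms_trans; [apply ms_perm; eauto|auto].
  - right; exists l3; split.
    + eapply ms_trans; [apply ms_perm; eauto|apply ms_cons; auto using ms_refl].
    + eapply ms_trans; [apply ms_perm, Permutation_sym; eauto|auto].
Qed.

Lemma split_app : forall (La Lb : list judg) b l', ms_eq (La ++ Lb) (b :: l') ->
  (exists La', ms_eq La (b :: La') /\ ms_eq (La' ++ Lb) l') \/
  (exists Lb', ms_eq Lb (b :: Lb') /\ ms_eq (La ++ Lb') l').
Proof.
  intros La Lb b l' H; destruct (ms_split H) as [c [M [HP [Hcb HM]]]].
  assert (Hin : In c (La ++ Lb)) by (apply (Permutation_in c (Permutation_sym HP)); simpl; auto).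
  apply in_app_or in Hin; destruct Hin as [Hin|Hin];
  apply in_split in Hin; destruct Hin as [x [y ->]].
  - left; exists (x ++ y); split.
    + eapply ms_trans; [apply ms_perm, Permutation_sym, Permutation_middle|].
      apply ms_cons; auto using ms_refl.
    + eapply ms_trans; [|apply HM]. apply ms_perm.
      apply Permutation_cons_inv with c. eapply Permutation_trans; [|apply HP].
      rewrite <- !app_assoc. simpl. apply Permutation_middle.
  - right; exists (x ++ y); split.
    + eapply ms_trans; [apply ms_perm, Permutation_sym, Permutation_middle|].
      apply ms_cons; auto using ms_refl.
    + eapply ms_trans; [|apply HM]. apply ms_perm.
      apply Permutation_cons_inv with c. eapply Permutation_trans; [|apply HP].
      rewrite !app_assoc. apply Permutation_middle.
Qed.

Inductive derivh : nat -> list judg -> list judg -> prop -> wexp -> Prop :=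
| h_conv : forall n G L C w G' L' C' w',
    derivh n G L C w -> set_eq G G' -> ms_eq L L' -> peq C C' -> weq w w' ->
    derivh (S n) G' L' C' w'
| h_init : forall n G p ts u, derivh (S n) G [(Atom p ts, u)] (Atom p ts) u
| h_copy : forall n G L k A u C w,
    In k G -> jeq k (A, u) -> derivh n G ((A, u) :: L) C w -> derivh (S n) G L C w
| h_tensorR : forall n G L L' A B w,
    derivh n G L A w -> derivh n G L' B w -> derivh (S n) G (L ++ L') (Tensor A B) w
| h_tensorL : forall n G L A B u C w,
    derivh n G ((A, u) :: (B, u) :: L) C w -> derivh (S n) G ((Tensor A B, u) :: L) C w
| h_oneR : forall n G w, derivh (S n) G [] One w
| h_oneL : forall n G L u C w, derivh n G L C w -> derivh (S n) G ((One, u) :: L) C w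
| h_lolliR : forall n G L A B w,
    derivh n G ((A, w) :: L) B w -> derivh (S n) G L (Lolli A B) w
| h_lolliL : forall n G L L' A B u C w,
    derivh n G L A u -> derivh n G ((B, u) :: L') C w ->
    derivh (S n) G ((Lolli A B, u) :: L ++ L') C w
| h_topR : forall n G L w, derivh (S n) G L Top w
| h_zeroL : forall n G L u C w, derivh (S n) G ((Zero, u) :: L) C w
| h_withR : forall n G L A B w,
    derivh n G L A w -> derivh n G L B w -> derivh (S n) G L (With A B) w
| h_withL1 : forall n G L A B u C w,
    derivh n G ((A, u) :: L) C w -> derivh (S n) G ((With A B, u) :: L) C w
| h_withL2 : forall n G L A B u C w,
    derivh n G ((B, u) :: L) C w -> derivh (S n) G ((With A B, u) :: L) C w
| h_plusR1 : forall n G L A B w, derivh n G L A w -> derivh (S n) G L (Plus A B) w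
| h_plusR2 : forall n G L A B w, derivh n G L B w -> derivh (S n) G L (Plus A B) w
| h_plusL : forall n G L A B u C w,
    derivh n G ((A, u) :: L) C w -> derivh n G ((B, u) :: L) C w ->
    derivh (S n) G ((Plus A B, u) :: L) C w
| h_allTR : forall n G L A w,
    derivh n (map (@jshiftt D Fs Ps) G) (map (@jshiftt D Fs Ps) L) A w -> derivh (S n) G L (AllT A) w
| h_allTL : forall n G L A t u C w,
    derivh n G ((psubt (tsingle t) A, u) :: L) C w -> derivh (S n) G ((AllT A, u) :: L) C w
| h_exTR : forall n G L A t w,
    derivh n G L (psubt (tsingle t) A) w -> derivh (S n) G L (ExT A) w
| h_exTL : forall n G L A u C w,
    derivh n (map (@jshiftt D Fs Ps) G) ((A, u) :: map (@jshiftt D Fs Ps) L)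
          (psubt (fun n => TVar (S n)) C) w ->
    derivh (S n) G ((ExT A, u) :: L) C w
| h_allWR : forall n G L A w,
    derivh n (map (@jshiftw D Fs Ps) G) (map (@jshiftw D Fs Ps) L) A (wshift w) -> derivh (S n) G L (AllW A) w
| h_allWL : forall n G L A v u C w,
    derivh n G ((psubw (wsingle v) A, u) :: L) C w -> derivh (S n) G ((AllW A, u) :: L) C w
| h_exWR : forall n G L A v w,
    derivh n G L (psubw (wsingle v) A) w -> derivh (S n) G L (ExW A) w
| h_exWL : forall n G L A u C w,
    derivh n (map (@jshiftw D Fs Ps) G) ((A, wshift u) :: map (@jshiftw D Fs Ps) L)
          (psubw (fun n => WV (S n)) C) (wshift w) ->
    derivh (S n) G ((ExW A, u) :: L) C w
| h_bangR : forall n G A w, derivh n G [] A w -> derivh (S n) G [] (Bang A) w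
| h_bangL : forall n G L A u C w,
    derivh n ((A, u) :: G) L C w -> derivh (S n) G ((Bang A, u) :: L) C w
| h_atR : forall n G L A u v, derivh n G L A u -> derivh (S n) G L (At A u) v
| h_atL : forall n G L A u v C w,
    derivh n G ((A, u) :: L) C w -> derivh (S n) G ((At A u, v) :: L) C w
| h_downR : forall n G L A w,
    derivh n G L (psubw (wsingle w) A) w -> derivh (S n) G L (Down A) w
| h_downL : forall n G L A v C w,
    derivh n G ((psubw (wsingle v) A, v) :: L) C w -> derivh (S n) G ((Down A, v) :: L) C w.

Lemma d_conv' : forall (G L : list judg) (C : prop) w G' L' C' w',
    deriv G L C w -> set_eq G G' -> ms_eq L L' -> peq C C' -> weq w w' ->
    deriv G' L' C' w'.
Proof. intros; eapply d_conv; eauto. Qed.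
Lemma dconvL : forall (G L L' : list judg) C w, deriv G L C w -> ms_eq L L' -> deriv G L' C w.
Proof. intros; eapply d_conv; eauto using set_eq_refl, peq_refl, weq_refl. Qed.
Lemma dcopy : forall (G L : list judg) k j C w, In k G -> jeq k j -> deriv G (j :: L) C w -> deriv G L C w.
Proof.
  intros G L [A u] j C w Hin Hj H; eapply d_copy; [exact Hin|].
  eapply dconvL; [exact H|]. apply ms_cons; auto using jeq_sym, ms_refl.
Qed.

Lemma derivh_deriv : forall n (G L : list judg) C w, derivh n G L C w -> deriv G L C w.
Proof.
  induction 1; try (econstructor; eauto; fail).
  eapply dcopy; eauto.
Qed.

Lemma derivh_lift : forall n (G L : list judg) C w, derivh n G L C w -> forall m, n <= m -> derivh m G L C w.
Proof.
  induction 1; intros m Hm; (destruct m; [lia|]);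
  try (econstructor; eauto; (apply IHderivh || apply IHderivh1 || apply IHderivh2); lia).
  all: econstructor; eauto.
Qed.

Lemma deriv_derivh : forall (G L : list judg) C w, deriv G L C w -> exists n, derivh n G L C w.
Proof.
  induction 1;
  repeat match goal with H : exists n, _ |- _ => destruct H end;
  [ exists (S x); eapply h_conv; eauto
  | exists 1; eapply h_init
  | exists (S x); eapply h_copy; eauto using jeq_refl
  | exists (S (max x x0)); eapply h_tensorR; eapply derivh_lift; eauto; lia
  | exists (S x); eapply h_tensorL; eauto
  | exists 1; eapply h_oneR
  | exists (S x); eapply h_oneL; eauto
  | exists (S x); eapply h_lolliR; eauto
  | exists (S (max x x0)); eapply h_lolliL; eapply derivh_lift; eauto; lia
  | exists 1; eapply h_topR
  | exists 1; eapply h_zeroL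
  | exists (S (max x x0)); eapply h_withR; eapply derivh_lift; eauto; lia
  | exists (S x); eapply h_withL1; eauto
  | exists (S x); eapply h_withL2; eauto
  | exists (S x); eapply h_plusR1; eauto
  | exists (S x); eapply h_plusR2; eauto
  | exists (S (max x x0)); eapply h_plusL; eapply derivh_lift; eauto; lia
  | exists (S x); eapply h_allTR; eauto
  | exists (S x); eapply h_allTL; eauto
  | exists (S x); eapply h_exTR; eauto
  | exists (S x); eapply h_exTL; eauto
  | exists (S x); eapply h_allWR; eauto
  | exists (S x); eapply h_allWL; eauto
  | exists (S x); eapply h_exWR; eauto
  | exists (S x); eapply h_exWL; eauto
  | exists (S x); eapply h_bangR; eauto
  | exists (S x); eapply h_bangL; eauto
  | exists (S x); eapply h_atR; eauto
  | exists (S x); eapply h_atL; eauto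
  | exists (S x); eapply h_downR; eauto
  | exists (S x); eapply h_downL; eauto].
Qed.

Lemma hweak : forall n (G L : list judg) C w, derivh n G L C w ->
  forall G', sub G G' -> derivh n G' L C w.
Proof.
  induction 1; intros G2 HG;
  [ eapply h_conv; [apply IHderivh; apply sub_trans with G'; [apply set_eq_sub; auto|exact HG] | apply set_eq_refl | eauto..]
  | eapply h_init; eauto
  | destruct (HG k H) as [k' [Hk' Hkk']]; eapply h_copy with (k := k'); [exact Hk' | exact (jeq_trans (jeq_sym Hkk') H0) | apply IHderivh; auto]
  | eapply h_tensorR; eauto
  | eapply h_tensorL; eauto
  | eapply h_oneR; eauto
  | eapply h_oneL; eauto
  | eapply h_lolliR; eauto
  | eapply h_lolliL; eauto
  | eapply h_topR; eauto
  | eapply h_zeroL; eauto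
  | eapply h_withR; eauto
  | eapply h_withL1; eauto
  | eapply h_withL2; eauto
  | eapply h_plusR1; eauto
  | eapply h_plusR2; eauto
  | eapply h_plusL; eauto
  | eapply h_allTR; apply IHderivh; apply sub_map; auto; intros; apply jeq_jsubt; auto
  | eapply h_allTL; eauto
  | eapply h_exTR; eauto
  | eapply h_exTL; apply IHderivh; apply sub_map; auto; intros; apply jeq_jsubt; auto
  | eapply h_allWR; apply IHderivh; apply sub_map; auto; intros; apply jeq_jsubw; auto
  | eapply h_allWL; eauto
  | eapply h_exWR; eauto
  | eapply h_exWL; apply IHderivh; apply sub_map; auto; intros; apply jeq_jsubw; auto
  | eapply h_bangR; eauto
  | eapply h_bangL; apply IHderivh; apply sub_cons; auto
  | eapply h_atR; eauto
  | eapply h_atL; eauto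
  | eapply h_downR; eauto
  | eapply h_downL; eauto ].
Qed.

Lemma hsubt : forall n (G L : list judg) C w, derivh n G L C w ->
  forall s, derivh n (map (jsubt s) G) (map (jsubt s) L) (psubt s C) w.
Proof.
  induction 1; intros s; simpl in *;
  [ eapply h_conv; [apply IHderivh | apply set_eq_map; [intros; apply jeq_jsubt; auto|auto] | apply ms_map; [intros; apply jeq_jsubt; auto|auto] | apply peq_psubt; auto | auto]
  | eapply h_init; eauto
  | eapply h_copy; [apply in_map; eauto | apply (jeq_jsubt s H0) | apply (IHderivh s)]
  | rewrite map_app; eapply h_tensorR; eauto
  | eapply h_tensorL; eauto
  | eapply h_oneR; eauto
  | eapply h_oneL; eauto
  | eapply h_lolliR; eauto
  | rewrite map_app; eapply h_lolliL; [apply IHderivh1 | apply (IHderivh2 s)]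
  | eapply h_topR; eauto
  | eapply h_zeroL; eauto
  | eapply h_withR; eauto
  | eapply h_withL1; eauto
  | eapply h_withL2; eauto
  | eapply h_plusR1; eauto
  | eapply h_plusR2; eauto
  | eapply h_plusL; eauto
  | eapply h_allTR; rewrite <- !map_jsubt_shiftt; apply IHderivh
  | specialize (IHderivh s); simpl in IHderivh; rewrite psubt_single in IHderivh; eapply h_allTL; exact IHderivh
  | specialize (IHderivh s); rewrite psubt_single in IHderivh; eapply h_exTR; exact IHderivh
  | specialize (IHderivh (tup s)); simpl in IHderivh; rewrite !map_jsubt_shiftt, psubt_up_sh in IHderivh; eapply h_exTL; exact IHderivh
  | eapply h_allWR; rewrite <- !map_jsubt_shiftw; apply IHderivh
  | specialize (IHderivh s); simpl in IHderivh; rewrite psubt_psubw in IHderivh; eapply h_allWL; exact IHderivh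
  | specialize (IHderivh s); rewrite psubt_psubw in IHderivh; eapply h_exWR; exact IHderivh
  | specialize (IHderivh s); simpl in IHderivh; rewrite !map_jsubt_shiftw, psubt_psubw in IHderivh; eapply h_exWL; exact IHderivh
  | eapply h_bangR; eauto
  | eapply h_bangL; apply (IHderivh s)
  | eapply h_atR; eauto
  | eapply h_atL; eauto
  | specialize (IHderivh s); rewrite psubt_psubw in IHderivh; eapply h_downR; exact IHderivh
  | specialize (IHderivh s); simpl in IHderivh; rewrite psubt_psubw in IHderivh; eapply h_downL; exact IHderivh ].
Qed.

Lemma hsubw : forall n (G L : list judg) C w, derivh n G L C w ->
  forall s, derivh n (map (jsubw s) G) (map (jsubw s) L) (psubw s C) (wsubst s w).
Proof.
  induction 1; intros s; simpl in *;
  [ eapply h_conv; [apply IHderivh | apply set_eq_map; [intros; apply jeq_jsubw; auto|auto] | apply ms_map; [intros; apply jeq_jsubw; auto|auto] | apply peq_psubw; auto using weq_refl | apply weq_subst; auto]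
  | eapply h_init; eauto
  | eapply h_copy; [apply in_map; eauto | apply (jeq_jsubw s H0) | apply (IHderivh s)]
  | rewrite map_app; eapply h_tensorR; eauto
  | eapply h_tensorL; eauto
  | eapply h_oneR; eauto
  | eapply h_oneL; eauto
  | eapply h_lolliR; eauto
  | rewrite map_app; eapply h_lolliL; [apply IHderivh1 | apply (IHderivh2 s)]
  | eapply h_topR; eauto
  | eapply h_zeroL; eauto
  | eapply h_withR; eauto
  | eapply h_withL1; eauto
  | eapply h_withL2; eauto
  | eapply h_plusR1; eauto
  | eapply h_plusR2; eauto
  | eapply h_plusL; eauto
  | eapply h_allTR; rewrite <- !map_jsubw_shiftt; apply IHderivh
  | specialize (IHderivh s); simpl in IHderivh; rewrite <- psubt_psubw in IHderivh; eapply h_allTL; exact IHderivh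
  | specialize (IHderivh s); rewrite <- psubt_psubw in IHderivh; eapply h_exTR; exact IHderivh
  | specialize (IHderivh s); simpl in IHderivh; rewrite !map_jsubw_shiftt, <- psubt_psubw in IHderivh; eapply h_exTL; exact IHderivh
  | specialize (IHderivh (wup s)); rewrite !map_jsubw_shiftw, wsubst_up_sh in IHderivh; eapply h_allWR; exact IHderivh
  | specialize (IHderivh s); simpl in IHderivh; rewrite psubw_single in IHderivh; eapply h_allWL; exact IHderivh
  | specialize (IHderivh s); rewrite psubw_single in IHderivh; eapply h_exWR; exact IHderivh
  | specialize (IHderivh (wup s)); simpl in IHderivh; rewrite !map_jsubw_shiftw, !wsubst_up_sh, psubw_up_sh in IHderivh; eapply h_exWL; exact IHderivh
  | eapply h_bangR; eauto
  | eapply h_bangL; apply (IHderivh s)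
  | eapply h_atR; eauto
  | eapply h_atL; eauto
  | specialize (IHderivh s); rewrite psubw_single in IHderivh; eapply h_downR; exact IHderivh
  | specialize (IHderivh s); simpl in IHderivh; rewrite psubw_single in IHderivh; eapply h_downL; exact IHderivh ].
Qed.


Lemma dweak : forall (G L : list judg) C w, deriv G L C w -> forall G', sub G G' -> deriv G' L C w.
Proof.
  intros. destruct (deriv_derivh H) as [n Hn]. eapply derivh_deriv, hweak; eauto.
Qed.
Lemma dsubt : forall (G L : list judg) C w, deriv G L C w ->
  forall s, deriv (map (jsubt s) G) (map (jsubt s) L) (psubt s C) w.
Proof.
  intros. destruct (deriv_derivh H) as [n Hn]. eapply derivh_deriv, hsubt; eauto.
Qed.
Lemma dsubw : forall (G L : list judg) C w, deriv G L C w ->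
  forall s, deriv (map (jsubw s) G) (map (jsubw s) L) (psubw s C) (wsubst s w).
Proof.
  intros. destruct (deriv_derivh H) as [n Hn]. eapply derivh_deriv, hsubw; eauto.
Qed.

Lemma ms_swap : forall (a b : judg) l, ms_eq (a :: b :: l) (b :: a :: l).
Proof. intros; apply ms_perm; constructor. Qed.
Lemma ms_head : forall (a b : judg) l, jeq a b -> ms_eq (a :: l) (b :: l).
Proof. intros; apply ms_cons; auto using ms_refl. Qed.
Lemma ms_mid : forall (a b : judg) l1 l2, jeq a b -> ms_eq (l1 ++ a :: l2) (b :: l1 ++ l2).
Proof.
  intros; eapply ms_trans; [apply ms_perm, Permutation_sym, Permutation_middle|apply ms_head; auto].
Qed.
Lemma sub_head : forall (a b : judg) G, jeq a b -> sub (a :: G) (b :: G).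
Proof.
  intros a b G H j [<-|Hj]; [exists b; split; simpl; auto|exists j; split; simpl; auto using jeq_refl].
Qed.
Lemma jeq_pair : forall (A B : prop) u v, peq A B -> weq u v -> jeq (A, u) (B, v).
Proof. intros; split; auto. Qed.

Definition Cut1 k := forall (A : prop), size A <= k -> forall G L1 u L2 L' C w,
  deriv G L1 A u -> deriv G L2 C w -> ms_eq L2 ((A, u) :: L') -> deriv G (L1 ++ L') C w.
Definition Cut2 k := forall (A : prop), size A <= k -> forall G2 L C w G1 u,
  deriv G2 L C w -> sub G2 ((A, u) :: G1) -> deriv G1 [] A u -> deriv G1 L C w.

Inductive RF : list judg -> list judg -> prop -> wexp -> Prop :=
| RF_init : forall G p ts u, RF G [(Atom p ts, u)] (Atom p ts) u
| RF_tensor : forall G L L' A B w, deriv G L A w -> deriv G L' B w -> RF G (L ++ L') (Tensor A B) w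
| RF_one : forall G w, RF G [] One w
| RF_lolli : forall G L A B w, deriv G ((A, w) :: L) B w -> RF G L (Lolli A B) w
| RF_top : forall G L w, RF G L Top w
| RF_with : forall G L A B w, deriv G L A w -> deriv G L B w -> RF G L (With A B) w
| RF_plus1 : forall G L A B w, deriv G L A w -> RF G L (Plus A B) w
| RF_plus2 : forall G L A B w, deriv G L B w -> RF G L (Plus A B) w
| RF_allT : forall G L A w, deriv (map (@jshiftt D Fs Ps) G) (map (@jshiftt D Fs Ps) L) A w -> RF G L (AllT A) w
| RF_exT : forall G L A t w, deriv G L (psubt (tsingle t) A) w -> RF G L (ExT A) w
| RF_allW : forall G L A w, deriv (map (@jshiftw D Fs Ps) G) (map (@jshiftw D Fs Ps) L) A (wshift w) -> RF G L (AllW A) w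
| RF_exW : forall G L A v w, deriv G L (psubw (wsingle v) A) w -> RF G L (ExW A) w
| RF_bang : forall G A w, deriv G [] A w -> RF G [] (Bang A) w
| RF_at : forall G L A u v, deriv G L A u -> RF G L (At A u) v
| RF_down : forall G L A w, deriv G L (psubw (wsingle w) A) w -> RF G L (Down A) w.

Inductive LP : list judg -> judg -> list judg -> prop -> wexp -> Prop :=
| LP_init : forall G p ts u, LP G (Atom p ts, u) [] (Atom p ts) u
| LP_tensor : forall G L A B u C w, deriv G ((A, u) :: (B, u) :: L) C w -> LP G (Tensor A B, u) L C w
| LP_one : forall G L u C w, deriv G L C w -> LP G (One, u) L C w
| LP_lolli : forall G L L' A B u C w, deriv G L A u -> deriv G ((B, u) :: L') C w ->
    LP G (Lolli A B, u) (L ++ L') C w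
| LP_zero : forall G L u C w, LP G (Zero, u) L C w
| LP_with1 : forall G L A B u C w, deriv G ((A, u) :: L) C w -> LP G (With A B, u) L C w
| LP_with2 : forall G L A B u C w, deriv G ((B, u) :: L) C w -> LP G (With A B, u) L C w
| LP_plus : forall G L A B u C w, deriv G ((A, u) :: L) C w -> deriv G ((B, u) :: L) C w ->
    LP G (Plus A B, u) L C w
| LP_allT : forall G L A t u C w, deriv G ((psubt (tsingle t) A, u) :: L) C w -> LP G (AllT A, u) L C w
| LP_exT : forall G L A u C w, deriv (map (@jshiftt D Fs Ps) G) ((A, u) :: map (@jshiftt D Fs Ps) L)
          (psubt (fun n => TVar (S n)) C) w -> LP G (ExT A, u) L C w
| LP_allW : forall G L A v u C w, deriv G ((psubw (wsingle v) A, u) :: L) C w -> LP G (AllW A, u) L C w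
| LP_exW : forall G L A u C w, deriv (map (@jshiftw D Fs Ps) G) ((A, wshift u) :: map (@jshiftw D Fs Ps) L)
          (psubw (fun n => WV (S n)) C) (wshift w) -> LP G (ExW A, u) L C w
| LP_bang : forall G L A u C w, deriv ((A, u) :: G) L C w -> LP G (Bang A, u) L C w
| LP_at : forall G L A u v C w, deriv G ((A, u) :: L) C w -> LP G (At A u, v) L C w
| LP_down : forall G L A v C w, deriv G ((psubw (wsingle v) A, v) :: L) C w -> LP G (Down A, v) L C w.

Section Key.
Variable k : nat.
Hypothesis H1 : Cut1 k.
Hypothesis H2 : Cut2 k.

Lemma kc_init : forall (G : list judg) p ts u p' ts' u0,
  p' = p -> ts' = ts -> weq u0 u ->
  deriv G ([(Atom p ts, u)] ++ []) (Atom p' ts') u0.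
Proof.
  intros G p ts u p' ts' u0 -> -> Hw; simpl.
  eapply d_conv'; [apply d_init | apply set_eq_refl | apply ms_refl | apply peq_refl | apply weq_sym; auto].
Qed.

Lemma kc_tensor : forall G La Lb (A B : prop) u A0 B0 u0 L C w,
  deriv G La A u -> deriv G Lb B u -> S (size A + size B) <= S k ->
  deriv G ((A0, u0) :: (B0, u0) :: L) C w -> peq A0 A -> peq B0 B -> weq u0 u ->
  deriv G ((La ++ Lb) ++ L) C w.
Proof.
  intros G La Lb A B u A0 B0 u0 L C w Ha Hb Hs H Hp1 Hp2 Hw.
  assert (E1 : deriv G (Lb ++ (A0, u0) :: L) C w).
  { eapply (H1 (A:=B)); [lia|exact Hb|exact H|].
    eapply ms_trans; [apply ms_swap|]. apply ms_head, jeq_pair; auto. }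
  assert (E2 : deriv G (La ++ Lb ++ L) C w).
  { eapply (H1 (A:=A)); [lia|exact Ha|exact E1|]. apply ms_mid, jeq_pair; auto. }
  rewrite <- app_assoc; exact E2.
Qed.

Lemma kc_one : forall (G L : list judg) C w, deriv G L C w -> deriv G ([] ++ L) C w.
Proof. auto. Qed.

Lemma kc_lolli : forall G L1 (A B : prop) u A0 B0 u0 La Lb C w,
  deriv G ((A, u) :: L1) B u -> S (size A + size B) <= S k ->
  deriv G La A0 u0 -> deriv G ((B0, u0) :: Lb) C w -> peq A0 A -> peq B0 B -> weq u0 u ->
  deriv G (L1 ++ La ++ Lb) C w.
Proof.
  intros G L1 A B u A0 B0 u0 La Lb C w H Hs Ha Hb Hp1 Hp2 Hw.
  assert (E1 : deriv G (La ++ L1) B u).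
  { eapply (H1 (A:=A0)); [assert (size A0 = size A) by (apply size_peq; auto); lia|exact Ha|exact H|].
    apply ms_head, jeq_pair; auto using peq_sym, weq_sym. }
  assert (E2 : deriv G ((La ++ L1) ++ Lb) C w).
  { eapply (H1 (A:=B)); [lia|exact E1|exact Hb|]. apply ms_head, jeq_pair; auto. }
  eapply dconvL; [exact E2|]. apply ms_perm.
  rewrite <- app_assoc. apply Permutation_app_swap_app.
Qed.

Lemma kc_simple : forall G L1 (A A0 : prop) u u0 L C w,
  deriv G L1 A u -> size A <= k -> deriv G ((A0, u0) :: L) C w -> peq A0 A -> weq u0 u ->
  deriv G (L1 ++ L) C w.
Proof.
  intros. eapply (H1 (A:=A)); [lia|eauto|eauto|]. apply ms_head, jeq_pair; auto.
Qed.

Lemma kc_with1 : forall G L1 (A B : prop) u A0 B0 u0 L C w,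
  deriv G L1 A u -> S (size A + size B) <= S k ->
  deriv G ((A0, u0) :: L) C w -> peq A0 A -> peq B0 B -> weq u0 u -> deriv G (L1 ++ L) C w.
Proof. intros; eapply kc_simple; eauto; lia. Qed.
Lemma kc_with2 : forall G L1 (A B : prop) u A0 B0 u0 L C w,
  deriv G L1 B u -> S (size A + size B) <= S k ->
  deriv G ((B0, u0) :: L) C w -> peq A0 A -> peq B0 B -> weq u0 u -> deriv G (L1 ++ L) C w.
Proof. intros; eapply kc_simple; eauto; lia. Qed.

Lemma kc_allT : forall G L1 (A : prop) u A0 u0 t L C w,
  deriv (map (@jshiftt D Fs Ps) G) (map (@jshiftt D Fs Ps) L1) A u -> S (size A) <= S k ->
  deriv G ((psubt (tsingle t) A0, u0) :: L) C w -> peq A0 A -> weq u0 u -> deriv G (L1 ++ L) C w.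
Proof.
  intros. apply dsubt with (s := tsingle t) in H.
  rewrite !map_jsubt_single_sh in H.
  eapply kc_simple; [exact H| |exact H3|apply peq_psubt; exact H4|exact H5]. rewrite size_psubt; lia.
Qed.

Lemma kc_exT : forall G L1 (A : prop) u A0 u0 t L C w,
  deriv G L1 (psubt (tsingle t) A) u -> S (size A) <= S k ->
  deriv (map (@jshiftt D Fs Ps) G) ((A0, u0) :: map (@jshiftt D Fs Ps) L)
          (psubt (fun n => TVar (S n)) C) w -> peq A0 A -> weq u0 u -> deriv G (L1 ++ L) C w.
Proof.
  intros. apply dsubt with (s := tsingle t) in H3. simpl in H3.
  rewrite !map_jsubt_single_sh, !psubt_single_sh in H3.
  eapply kc_simple; [exact H| |exact H3|apply peq_psubt; exact H4|exact H5]. rewrite size_psubt; lia.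
Qed.

Lemma kc_allW : forall G L1 (A : prop) u A0 u0 v L C w,
  deriv (map (@jshiftw D Fs Ps) G) (map (@jshiftw D Fs Ps) L1) A (wshift u) -> S (size A) <= S k ->
  deriv G ((psubw (wsingle v) A0, u0) :: L) C w -> peq A0 A -> weq u0 u -> deriv G (L1 ++ L) C w.
Proof.
  intros. apply dsubw with (s := wsingle v) in H.
  rewrite !map_jsubw_single_sh, wsubst_single_sh in H.
  eapply kc_simple; [exact H| |exact H3| |exact H5]. rewrite size_psubw; lia.
  apply peq_psubw; auto; intros; apply weq_refl.
Qed.

Lemma kc_exW : forall G L1 (A : prop) u A0 u0 v L C w,
  deriv G L1 (psubw (wsingle v) A) u -> S (size A) <= S k ->
  deriv (map (@jshiftw D Fs Ps) G) ((A0, wshift u0) :: map (@jshiftw D Fs Ps) L)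
          (psubw (fun n => WV (S n)) C) (wshift w) -> peq A0 A -> weq u0 u -> deriv G (L1 ++ L) C w.
Proof.
  intros. apply dsubw with (s := wsingle v) in H3. simpl in H3.
  rewrite !map_jsubw_single_sh, !psubw_single_sh, !wsubst_single_sh in H3.
  eapply kc_simple; [exact H| |exact H3| |exact H5]. rewrite size_psubw; lia.
  apply peq_psubw; auto; intros; apply weq_refl.
Qed.

Lemma kc_bang : forall G (A : prop) u A0 u0 L C w,
  deriv G [] A u -> S (size A) <= S k ->
  deriv ((A0, u0) :: G) L C w -> peq A0 A -> weq u0 u -> deriv G ([] ++ L) C w.
Proof.
  intros; simpl. eapply (H2 (A:=A)); [lia|exact H3| |exact H]. apply sub_head, jeq_pair; auto.
Qed.

Lemma kc_at : forall G L1 (A : prop) x A0 x0 L C w,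
  deriv G L1 A x -> S (size A) <= S k ->
  deriv G ((A0, x0) :: L) C w -> peq A0 A -> weq x0 x -> deriv G (L1 ++ L) C w.
Proof. intros; eapply kc_simple; eauto; lia. Qed.

Lemma kc_down : forall G L1 (A : prop) u A0 u0 L C w,
  deriv G L1 (psubw (wsingle u) A) u -> S (size A) <= S k ->
  deriv G ((psubw (wsingle u0) A0, u0) :: L) C w -> peq A0 A -> weq u0 u -> deriv G (L1 ++ L) C w.
Proof.
  intros. eapply kc_simple; [exact H| |exact H3| |exact H5]. rewrite size_psubw; lia.
  apply peq_psubw; auto. intros [|m]; simpl; auto using weq_refl.
Qed.

Lemma key : forall G L1 A u, RF G L1 A u -> size A <= S k ->
  forall j L2 C w, LP G j L2 C w -> jeq j (A, u) -> deriv G (L1 ++ L2) C w.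
Proof.
  intros G L1 A u HR Hs j L2 C w HL [Hp Hw].
  destruct HL; destruct HR; simpl in Hp, Hw, Hs; try contradiction.
  all: repeat match goal with H : _ /\ _ |- _ => destruct H end.
  all: first
    [ solve [eapply kc_init; eauto]
    | solve [eapply kc_tensor; eauto]
    | solve [eapply kc_one; eauto]
    | solve [eapply kc_lolli; eauto]
    | solve [match goal with Ha : deriv _ _ _ _, Hb : deriv _ _ _ _ |- _ =>
        eapply kc_simple; [exact Ha| |exact Hb|eassumption|eassumption]; lia end]
    | solve [eapply kc_allT; eauto]
    | solve [eapply kc_exT; eauto]
    | solve [eapply kc_allW; eauto]
    | solve [eapply kc_exW; eauto]
    | solve [eapply kc_bang; eauto]
    | solve [eapply kc_at; eauto]
    | solve [eapply kc_down; eauto]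
    | idtac ].
Qed.
End Key.

Lemma sub_shiftt : forall G G', sub G G' -> sub (map (@jshiftt D Fs Ps) G) (map (@jshiftt D Fs Ps) G').
Proof. intros; apply sub_map; auto. intros; exact (jeq_jsubt (fun n => TVar (S n)) H0). Qed.
Lemma sub_shiftw : forall G G', sub G G' -> sub (map (@jshiftw D Fs Ps) G) (map (@jshiftw D Fs Ps) G').
Proof. intros; apply sub_map; auto. intros; exact (jeq_jsubw (fun n => WV (S n)) H0). Qed.
Lemma ms_shiftt : forall L L', ms_eq L L' -> ms_eq (map (@jshiftt D Fs Ps) L) (map (@jshiftt D Fs Ps) L').
Proof. intros; apply ms_map; auto. intros; exact (jeq_jsubt (fun n => TVar (S n)) H0). Qed.
Lemma ms_shiftw : forall L L', ms_eq L L' -> ms_eq (map (@jshiftw D Fs Ps) L) (map (@jshiftw D Fs Ps) L').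
Proof. intros; apply ms_map; auto. intros; exact (jeq_jsubw (fun n => WV (S n)) H0). Qed.
Lemma sub_wk : forall (a : judg) G, sub G (a :: G).
Proof. intros a G j Hj; exists j; split; simpl; auto using jeq_refl. Qed.
Lemma sub_cons_swap : forall (a b : judg) G2 G1, sub G2 (a :: G1) -> sub (b :: G2) (a :: b :: G1).
Proof.
  intros a b G2 G1 H j [<-|Hj]; [exists b; split; simpl; auto using jeq_refl|].
  destruct (H j Hj) as [k0 [Hk Hjk]]; exists k0; split; simpl in *; intuition.
Qed.

Lemma ms_in1 : forall (a b : judg) L l3, ms_eq L (b :: l3) -> ms_eq (a :: L) (b :: a :: l3).
Proof. intros; eapply ms_trans; [apply ms_cons; [apply jeq_refl|eauto]|apply ms_swap]. Qed.
Lemma ms_in2 : forall (a1 a2 b : judg) L l3, ms_eq L (b :: l3) -> ms_eq (a1 :: a2 :: L) (b :: a1 :: a2 :: l3).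
Proof.
  intros; eapply ms_trans; [apply ms_cons; [apply jeq_refl|apply ms_in1; eauto]|apply ms_swap].
Qed.
Lemma ms_out1 : forall (a : judg) L1 l, ms_eq (L1 ++ a :: l) (a :: L1 ++ l).
Proof. intros; apply ms_perm, Permutation_sym, Permutation_middle. Qed.
Lemma ms_out2 : forall (a1 a2 : judg) L1 l, ms_eq (L1 ++ a1 :: a2 :: l) (a1 :: a2 :: L1 ++ l).
Proof.
  intros; eapply ms_trans; [apply ms_out1|]. apply ms_cons; [apply jeq_refl|apply ms_out1].
Qed.
Lemma ms_back : forall (a : judg) L1 l3 L', ms_eq (a :: l3) L' -> ms_eq (a :: L1 ++ l3) (L1 ++ L').
Proof.
  intros; eapply ms_trans; [apply ms_sym, ms_out1|]. apply ms_app; auto using ms_refl.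
Qed.
Lemma ms_back2 : forall (a : judg) L1 m l3 L', ms_eq m l3 -> ms_eq (a :: l3) L' -> ms_eq (a :: L1 ++ m) (L1 ++ L').
Proof.
  intros; apply ms_back; eapply ms_trans; [|eauto]. apply ms_cons; auto using jeq_refl.
Qed.

Definition CutH k N := forall n1 (G L1 : list judg) A u, derivh n1 G L1 A u ->
  forall n2 L2 C w, derivh n2 G L2 C w -> n1 + n2 <= N -> size A <= S k ->
  forall L', ms_eq L2 ((A, u) :: L') -> deriv G (L1 ++ L') C w.

Ltac useIH IH d1 d := eapply IH; [exact d1|exact d|lia|auto|].

Lemma commute2 : forall k N, CutH k N ->
  forall n2 G L2 C w, derivh n2 G L2 C w ->
  forall n1 L1 X x, derivh n1 G L1 X x -> size X <= S k ->
  (forall j L2 C w, LP G j L2 C w -> jeq j (X, x) -> deriv G (L1 ++ L2) C w) ->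
  n1 + n2 <= S N -> forall L', ms_eq L2 ((X, x) :: L') -> deriv G (L1 ++ L') C w.
Proof.
  intros k N IH n2 G L2 C w d2.
  destruct d2 as
    [ n G0 L0 C0 w0 G L C w Hd Hse Hms0 Hp Hw
    | n G p ts u
    | n G L k0 A u C w Hin Hj Hd
    | n G La Lb A B w Hd1 Hd2
    | n G L A B u C w Hd
    | n G w
    | n G L u C w Hd
    | n G L A B w Hd
    | n G La Lb A B u C w Hd1 Hd2
    | n G L w
    | n G L u C w
    | n G L A B w Hd1 Hd2
    | n G L A B u C w Hd
    | n G L A B u C w Hd
    | n G L A B w Hd
    | n G L A B w Hd
    | n G L A B u C w Hd1 Hd2
    | n G L A w Hd
    | n G L A t u C w Hd
    | n G L A t w Hd
    | n G L A u C w Hd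
    | n G L A w Hd
    | n G L A v u C w Hd
    | n G L A v w Hd
    | n G L A u C w Hd
    | n G A w Hd
    | n G L A u C w Hd
    | n G L A u v Hd
    | n G L A u v C w Hd
    | n G L A w Hd
    | n G L A v C w Hd ];
  intros n1 L1 X x d1 Hs Hkey Hn L' Hms.
  -
    apply hweak with (G' := G) in Hd; [|apply set_eq_sub; auto].
    eapply d_conv'; [useIH IH d1 Hd; eapply ms_trans; eauto | apply set_eq_refl | apply ms_refl | auto | auto].
  -
    destruct (split_head Hms) as [[Hj Hr]|[l3 [Hl Hr]]].
    + eapply dconvL; [eapply Hkey; [apply LP_init|exact Hj]|apply ms_app; auto using ms_refl].
    + exfalso; eapply ms_nil_cons; eauto.
  -
    eapply dcopy; [exact Hin|exact Hj|].
    eapply dconvL; [useIH IH d1 Hd|apply ms_out1].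
    eapply ms_trans; [apply ms_cons; [apply jeq_refl|exact Hms]|apply ms_swap].
  -
    destruct (split_app _ _ Hms) as [[La' [Hl Hr]]|[Lb' [Hl Hr]]].
    + eapply dconvL; [eapply d_tensorR; [useIH IH d1 Hd1; exact Hl|exact (derivh_deriv Hd2)]|].
      rewrite <- app_assoc; apply ms_app; auto using ms_refl.
    + eapply dconvL; [eapply d_tensorR; [exact (derivh_deriv Hd1)|useIH IH d1 Hd2; exact Hl]|].
      eapply ms_trans; [apply ms_perm, Permutation_app_swap_app|]. apply ms_app; auto using ms_refl.
  -
    destruct (split_head Hms) as [[Hj Hr]|[l3 [Hl Hr]]].
    + eapply dconvL; [eapply Hkey; [apply LP_tensor; exact (derivh_deriv Hd)|exact Hj]|apply ms_app; auto using ms_refl].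
    + eapply dconvL; [eapply d_tensorL; eapply dconvL; [useIH IH d1 Hd; apply ms_in2; exact Hl|apply ms_out2]|].
      apply ms_back; exact Hr.
  - exfalso; eapply ms_nil_cons; eauto.
  -
    destruct (split_head Hms) as [[Hj Hr]|[l3 [Hl Hr]]].
    + eapply dconvL; [eapply Hkey; [apply LP_one; exact (derivh_deriv Hd)|exact Hj]|apply ms_app; auto using ms_refl].
    + eapply dconvL; [eapply d_oneL; useIH IH d1 Hd; exact Hl|].
      apply ms_back; exact Hr.
  -
    apply d_lolliR. eapply dconvL; [useIH IH d1 Hd; apply ms_in1; exact Hms|apply ms_out1].
  -
    destruct (split_head Hms) as [[Hj Hr]|[l3 [Hl Hr]]].
    + eapply dconvL; [eapply Hkey; [apply LP_lolli; [exact (derivh_deriv Hd1)|exact (derivh_deriv Hd2)]|exact Hj]|apply ms_app; auto using ms_refl].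
    + destruct (split_app _ _ Hl) as [[La' [Hl' Hr']]|[Lb' [Hl' Hr']]].
      * eapply dconvL; [eapply d_lolliL; [useIH IH d1 Hd1; exact Hl'|exact (derivh_deriv Hd2)]|].
        rewrite <- app_assoc. eapply ms_back2; eauto.
      * eapply dconvL; [eapply d_lolliL; [exact (derivh_deriv Hd1)|eapply dconvL; [useIH IH d1 Hd2; apply ms_in1; exact Hl'|apply ms_out1]]|].
        eapply ms_trans; [apply ms_cons; [apply jeq_refl|apply ms_perm, Permutation_app_swap_app]|].
        eapply ms_back2; eauto.
  - apply d_topR.
  -
    destruct (split_head Hms) as [[Hj Hr]|[l3 [Hl Hr]]].
    + eapply dconvL; [eapply Hkey; [apply LP_zero|exact Hj]|apply ms_app; auto using ms_refl].
    + eapply dconvL; [apply d_zeroL|]. apply ms_back; exact Hr.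
  - apply d_withR; [useIH IH d1 Hd1|useIH IH d1 Hd2]; exact Hms.
  -
    destruct (split_head Hms) as [[Hj Hr]|[l3 [Hl Hr]]].
    + eapply dconvL; [eapply Hkey; [apply LP_with1; exact (derivh_deriv Hd)|exact Hj]|apply ms_app; auto using ms_refl].
    + eapply dconvL; [eapply d_withL1; eapply dconvL; [useIH IH d1 Hd; apply ms_in1; exact Hl|apply ms_out1]|].
      apply ms_back; exact Hr.
  -
    destruct (split_head Hms) as [[Hj Hr]|[l3 [Hl Hr]]].
    + eapply dconvL; [eapply Hkey; [apply LP_with2; exact (derivh_deriv Hd)|exact Hj]|apply ms_app; auto using ms_refl].
    + eapply dconvL; [eapply d_withL2; eapply dconvL; [useIH IH d1 Hd; apply ms_in1; exact Hl|apply ms_out1]|].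
      apply ms_back; exact Hr.
  - apply d_plusR1; useIH IH d1 Hd; exact Hms.
  - apply d_plusR2; useIH IH d1 Hd; exact Hms.
  -
    destruct (split_head Hms) as [[Hj Hr]|[l3 [Hl Hr]]].
    + eapply dconvL; [eapply Hkey; [apply LP_plus; [exact (derivh_deriv Hd1)|exact (derivh_deriv Hd2)]|exact Hj]|apply ms_app; auto using ms_refl].
    + eapply dconvL; [eapply (d_plusL (A:=A) (B:=B)); [eapply dconvL; [useIH IH d1 Hd1; apply ms_in1; exact Hl|apply ms_out1] | eapply dconvL; [useIH IH d1 Hd2; apply ms_in1; exact Hl|apply ms_out1]]|].
      apply ms_back; exact Hr.
  -
    apply d_allTR. rewrite map_app.
    eapply IH; [exact (hsubt d1 (fun n => TVar (S n)))|exact Hd|lia|rewrite size_psubt; auto|].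
    apply (ms_shiftt Hms).
  -
    destruct (split_head Hms) as [[Hj Hr]|[l3 [Hl Hr]]].
    + eapply dconvL; [eapply Hkey; [eapply LP_allT; exact (derivh_deriv Hd)|exact Hj]|apply ms_app; auto using ms_refl].
    + eapply dconvL; [eapply d_allTL; eapply dconvL; [useIH IH d1 Hd; apply ms_in1; exact Hl|apply ms_out1]|].
      apply ms_back; exact Hr.
  - eapply d_exTR; useIH IH d1 Hd; exact Hms.
  -
    destruct (split_head Hms) as [[Hj Hr]|[l3 [Hl Hr]]].
    + eapply dconvL; [eapply Hkey; [eapply LP_exT; exact (derivh_deriv Hd)|exact Hj]|apply ms_app; auto using ms_refl].
    + eapply dconvL; [eapply d_exTL|apply ms_back; exact Hr].
      rewrite map_app. eapply dconvL; [|apply ms_out1].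
      eapply IH; [exact (hsubt d1 (fun n => TVar (S n)))|exact Hd|lia|rewrite size_psubt; auto|].
      apply ms_in1. apply (ms_shiftt Hl).
  -
    apply d_allWR. rewrite map_app.
    eapply IH; [exact (hsubw d1 (fun n => WV (S n)))|exact Hd|lia|rewrite size_psubw; auto|].
    apply (ms_shiftw Hms).
  -
    destruct (split_head Hms) as [[Hj Hr]|[l3 [Hl Hr]]].
    + eapply dconvL; [eapply Hkey; [eapply LP_allW; exact (derivh_deriv Hd)|exact Hj]|apply ms_app; auto using ms_refl].
    + eapply dconvL; [eapply d_allWL; eapply dconvL; [useIH IH d1 Hd; apply ms_in1; exact Hl|apply ms_out1]|].
      apply ms_back; exact Hr.
  - eapply d_exWR; useIH IH d1 Hd; exact Hms.
  -
    destruct (split_head Hms) as [[Hj Hr]|[l3 [Hl Hr]]].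
    + eapply dconvL; [eapply Hkey; [eapply LP_exW; exact (derivh_deriv Hd)|exact Hj]|apply ms_app; auto using ms_refl].
    + eapply dconvL; [eapply d_exWL|apply ms_back; exact Hr].
      rewrite map_app. eapply dconvL; [|apply ms_out1].
      eapply IH; [exact (hsubw d1 (fun n => WV (S n)))|exact Hd|lia|rewrite size_psubw; auto|].
      apply ms_in1. apply (ms_shiftw Hl).
  - exfalso; eapply ms_nil_cons; eauto.
  -
    destruct (split_head Hms) as [[Hj Hr]|[l3 [Hl Hr]]].
    + eapply dconvL; [eapply Hkey; [eapply LP_bang; exact (derivh_deriv Hd)|exact Hj]|apply ms_app; auto using ms_refl].
    + eapply dconvL; [eapply d_bangL|apply ms_back; exact Hr].
      eapply IH; [exact (hweak d1 (sub_wk _ _))|exact Hd|lia|auto|exact Hl].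
  - eapply d_atR; useIH IH d1 Hd; exact Hms.
  -
    destruct (split_head Hms) as [[Hj Hr]|[l3 [Hl Hr]]].
    + eapply dconvL; [eapply Hkey; [eapply LP_at; exact (derivh_deriv Hd)|exact Hj]|apply ms_app; auto using ms_refl].
    + eapply dconvL; [eapply d_atL; eapply dconvL; [useIH IH d1 Hd; apply ms_in1; exact Hl|apply ms_out1]|].
      apply ms_back; exact Hr.
  - eapply d_downR; useIH IH d1 Hd; exact Hms.
  -
    destruct (split_head Hms) as [[Hj Hr]|[l3 [Hl Hr]]].
    + eapply dconvL; [eapply Hkey; [eapply LP_down; exact (derivh_deriv Hd)|exact Hj]|apply ms_app; auto using ms_refl].
    + eapply dconvL; [eapply d_downL; eapply dconvL; [useIH IH d1 Hd; apply ms_in1; exact Hl|apply ms_out1]|].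
      apply ms_back; exact Hr.
Qed.

Lemma cutH : forall k, Cut1 k -> Cut2 k -> forall N, CutH k N.
Proof.
  intros k Hc1 Hc2 N; induction N as [|N IHN].
  - intros n1 G L1 A u d1; destruct d1; intros; lia.
  - intros n1 G L1 A u d1.
    destruct d1 as [ n G0 L0 Y0 y0 G L Y y Hd Hse Hms0 Hp Hw
      | n G p ts y
      | n G L k0 B v Y y Hin Hj Hd
      | n G La Lb A B y Hd1 Hd2
      | n G L A B v Y y Hd
      | n G y
      | n G L v Y y Hd
      | n G L A B y Hd
      | n G La Lb A B v Y y Hd1 Hd2
      | n G L y
      | n G L v Y y
      | n G L A B y Hd1 Hd2
      | n G L A B v Y y Hd
      | n G L A B v Y y Hd
      | n G L A B y Hd
      | n G L A B y Hd
      | n G L A B v Y y Hd1 Hd2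
      | n G L A y Hd
      | n G L A t v Y y Hd
      | n G L A t y Hd
      | n G L A v Y y Hd
      | n G L A y Hd
      | n G L A z v Y y Hd
      | n G L A z y Hd
      | n G L A v Y y Hd
      | n G A y Hd
      | n G L A v Y y Hd
      | n G L A z y Hd
      | n G L A z v Y y Hd
      | n G L A y Hd
      | n G L A v Y y Hd ];
    intros n2 L2 C w d2 Hn Hs L' Hms.
    + apply hweak with (G' := G) in Hd; [|apply set_eq_sub; auto].
    assert (size Y0 = size Y) by (apply size_peq; auto).
    eapply dconvL; [eapply (IHN _ _ _ _ _ Hd); [exact d2|lia|lia|] | apply ms_app; [exact Hms0|apply ms_refl]].
    eapply ms_trans; [exact Hms|apply ms_head, jeq_pair; [apply peq_sym; auto|apply weq_sym; auto]].
    + eapply commute2; [exact IHN|exact d2|apply h_init|exact Hs|intros j L2' C' w' HL Hj; eapply key; [exact Hc1|exact Hc2|apply RF_init|exact Hs|exact HL|exact Hj]|exact Hn|exact Hms].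
    + eapply dcopy; [exact Hin|exact Hj|]. eapply (IHN _ _ _ _ _ Hd); [exact d2|lia|exact Hs|exact Hms].
    + eapply commute2; [exact IHN|exact d2|eapply h_tensorR; [exact Hd1|exact Hd2]|exact Hs|intros j L2' C' w' HL Hj; eapply key; [exact Hc1|exact Hc2|eapply RF_tensor; [exact (derivh_deriv Hd1)|exact (derivh_deriv Hd2)]|exact Hs|exact HL|exact Hj]|exact Hn|exact Hms].
    + eapply d_tensorL; eapply (IHN _ _ _ _ _ Hd); [exact d2|lia|exact Hs|exact Hms].
    + eapply commute2; [exact IHN|exact d2|apply h_oneR|exact Hs|intros j L2' C' w' HL Hj; eapply key; [exact Hc1|exact Hc2|apply RF_one|exact Hs|exact HL|exact Hj]|exact Hn|exact Hms].
    + eapply d_oneL; eapply (IHN _ _ _ _ _ Hd); [exact d2|lia|exact Hs|exact Hms].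
    + eapply commute2; [exact IHN|exact d2|eapply h_lolliR; exact Hd|exact Hs|intros j L2' C' w' HL Hj; eapply key; [exact Hc1|exact Hc2|eapply RF_lolli; exact (derivh_deriv Hd)|exact Hs|exact HL|exact Hj]|exact Hn|exact Hms].
    + simpl; rewrite <- app_assoc; eapply d_lolliL; [exact (derivh_deriv Hd1)| eapply (IHN _ _ _ _ _ Hd2); [exact d2|lia|exact Hs|exact Hms]].
    + eapply commute2; [exact IHN|exact d2|apply h_topR|exact Hs|intros j L2' C' w' HL Hj; eapply key; [exact Hc1|exact Hc2|apply RF_top|exact Hs|exact HL|exact Hj]|exact Hn|exact Hms].
    + apply d_zeroL.
    + eapply commute2; [exact IHN|exact d2|eapply h_withR; [exact Hd1|exact Hd2]|exact Hs|intros j L2' C' w' HL Hj; eapply key; [exact Hc1|exact Hc2|eapply RF_with; [exact (derivh_deriv Hd1)|exact (derivh_deriv Hd2)]|exact Hs|exact HL|exact Hj]|exact Hn|exact Hms].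
    + eapply d_withL1; eapply (IHN _ _ _ _ _ Hd); [exact d2|lia|exact Hs|exact Hms].
    + eapply d_withL2; eapply (IHN _ _ _ _ _ Hd); [exact d2|lia|exact Hs|exact Hms].
    + eapply commute2; [exact IHN|exact d2|eapply h_plusR1; exact Hd|exact Hs|intros j L2' C' w' HL Hj; eapply key; [exact Hc1|exact Hc2|eapply RF_plus1; exact (derivh_deriv Hd)|exact Hs|exact HL|exact Hj]|exact Hn|exact Hms].
    + eapply commute2; [exact IHN|exact d2|eapply h_plusR2; exact Hd|exact Hs|intros j L2' C' w' HL Hj; eapply key; [exact Hc1|exact Hc2|eapply RF_plus2; exact (derivh_deriv Hd)|exact Hs|exact HL|exact Hj]|exact Hn|exact Hms].
    + apply d_plusL; [eapply (IHN _ _ _ _ _ Hd1); [exact d2|lia|exact Hs|exact Hms] | eapply (IHN _ _ _ _ _ Hd2); [exact d2|lia|exact Hs|exact Hms]].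
    + eapply commute2; [exact IHN|exact d2|eapply h_allTR; exact Hd|exact Hs|intros j L2' C' w' HL Hj; eapply key; [exact Hc1|exact Hc2|eapply RF_allT; exact (derivh_deriv Hd)|exact Hs|exact HL|exact Hj]|exact Hn|exact Hms].
    + eapply d_allTL; eapply (IHN _ _ _ _ _ Hd); [exact d2|lia|exact Hs|exact Hms].
    + eapply commute2; [exact IHN|exact d2|eapply h_exTR; exact Hd|exact Hs|intros j L2' C' w' HL Hj; eapply key; [exact Hc1|exact Hc2|eapply RF_exT; exact (derivh_deriv Hd)|exact Hs|exact HL|exact Hj]|exact Hn|exact Hms].
    + apply d_exTL; rewrite map_app; eapply (IHN _ _ _ _ _ Hd); [exact (hsubt d2 (fun n => TVar (S n)))|lia|rewrite size_psubt; exact Hs|exact (ms_shiftt Hms)].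
    + eapply commute2; [exact IHN|exact d2|eapply h_allWR; exact Hd|exact Hs|intros j L2' C' w' HL Hj; eapply key; [exact Hc1|exact Hc2|eapply RF_allW; exact (derivh_deriv Hd)|exact Hs|exact HL|exact Hj]|exact Hn|exact Hms].
    + eapply d_allWL; eapply (IHN _ _ _ _ _ Hd); [exact d2|lia|exact Hs|exact Hms].
    + eapply commute2; [exact IHN|exact d2|eapply h_exWR; exact Hd|exact Hs|intros j L2' C' w' HL Hj; eapply key; [exact Hc1|exact Hc2|eapply RF_exW; exact (derivh_deriv Hd)|exact Hs|exact HL|exact Hj]|exact Hn|exact Hms].
    + apply d_exWL; rewrite map_app; eapply (IHN _ _ _ _ _ Hd); [exact (hsubw d2 (fun n => WV (S n)))|lia|rewrite size_psubw; exact Hs|exact (ms_shiftw Hms)].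
    + eapply commute2; [exact IHN|exact d2|eapply h_bangR; exact Hd|exact Hs|intros j L2' C' w' HL Hj; eapply key; [exact Hc1|exact Hc2|eapply RF_bang; exact (derivh_deriv Hd)|exact Hs|exact HL|exact Hj]|exact Hn|exact Hms].
    + apply d_bangL; eapply (IHN _ _ _ _ _ Hd); [exact (hweak d2 (sub_wk _ _))|lia|exact Hs|exact Hms].
    + eapply commute2; [exact IHN|exact d2|eapply h_atR; exact Hd|exact Hs|intros j L2' C' w' HL Hj; eapply key; [exact Hc1|exact Hc2|eapply RF_at; exact (derivh_deriv Hd)|exact Hs|exact HL|exact Hj]|exact Hn|exact Hms].
    + eapply d_atL; eapply (IHN _ _ _ _ _ Hd); [exact d2|lia|exact Hs|exact Hms].
    + eapply commute2; [exact IHN|exact d2|eapply h_downR; exact Hd|exact Hs|intros j L2' C' w' HL Hj; eapply key; [exact Hc1|exact Hc2|eapply RF_down; exact (derivh_deriv Hd)|exact Hs|exact HL|exact Hj]|exact Hn|exact Hms].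
    + eapply d_downL; eapply (IHN _ _ _ _ _ Hd); [exact d2|lia|exact Hs|exact Hms].
Qed.

Lemma cut2_aux : forall k, Cut1 k -> forall G2 L C w, deriv G2 L C w ->
  forall X G1 x, size X <= k -> sub G2 ((X, x) :: G1) -> deriv G1 [] X x -> deriv G1 L C w.
Proof.
  intros k Hc G2 L C w d2.
  induction d2 as [ G L C w G' L' C' w' Hd IH Hse Hms Hp Hw
    | G p ts u
    | G L A u C w Hin Hd IH
    | G L L' A B w Hd1 IH1 Hd2 IH2
    | G L A B u C w Hd IH
    | G w
    | G L u C w Hd IH
    | G L A B w Hd IH
    | G L L' A B u C w Hd1 IH1 Hd2 IH2
    | G L w
    | G L u C w
    | G L A B w Hd1 IH1 Hd2 IH2
    | G L A B u C w Hd IH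
    | G L A B u C w Hd IH
    | G L A B w Hd IH
    | G L A B w Hd IH
    | G L A B u C w Hd1 IH1 Hd2 IH2
    | G L A w Hd IH
    | G L A t u C w Hd IH
    | G L A t w Hd IH
    | G L A u C w Hd IH
    | G L A w Hd IH
    | G L A v u C w Hd IH
    | G L A v w Hd IH
    | G L A u C w Hd IH
    | G A w Hd IH
    | G L A u C w Hd IH
    | G L A u v Hd IH
    | G L A u v C w Hd IH
    | G L A w Hd IH
    | G L A v C w Hd IH ];
  intros X G1 x Hs Hsub HX.
    - eapply d_conv'; [eapply IH; [exact Hs | eapply sub_trans; [apply set_eq_sub; eassumption | exact Hsub] | exact HX] | apply set_eq_refl | eassumption..].
    - apply d_init.
    - destruct (Hsub _ Hin) as [k0 [Hk Hjk]]. pose proof (IH X G1 x Hs Hsub HX) as E. destruct Hk as [<-|Hk].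
      * assert (Hm : ms_eq ((A,u)::L) ((X,x)::L)) by (apply ms_head; exact Hjk).
        exact (Hc X Hs G1 [] x ((A,u)::L) L C w HX E Hm).
      * eapply dcopy; [exact Hk|apply jeq_sym; exact Hjk|exact E].
    - eapply d_tensorR; [eapply IH1|eapply IH2]; eauto.
    - eapply d_tensorL; eapply IH; eauto.
    - apply d_oneR.
    - eapply d_oneL; eapply IH; eauto.
    - eapply d_lolliR; eapply IH; eauto.
    - eapply d_lolliL; [eapply IH1|eapply IH2]; eauto.
    - apply d_topR.
    - apply d_zeroL.
    - eapply d_withR; [eapply IH1|eapply IH2]; eauto.
    - eapply d_withL1; eapply IH; eauto.
    - eapply d_withL2; eapply IH; eauto.
    - eapply d_plusR1; eapply IH; eauto.
    - eapply d_plusR2; eapply IH; eauto.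
    - eapply d_plusL; [eapply IH1|eapply IH2]; eauto.
    - apply d_allTR; eapply (IH (psubt (fun n => TVar (S n)) X) (map (@jshiftt D Fs Ps) G1) x); [rewrite size_psubt; exact Hs | exact (sub_shiftt Hsub) | exact (dsubt HX (fun n => TVar (S n)))].
    - eapply d_allTL; eapply IH; eauto.
    - eapply d_exTR; eapply IH; eauto.
    - apply d_exTL; eapply (IH (psubt (fun n => TVar (S n)) X) (map (@jshiftt D Fs Ps) G1) x); [rewrite size_psubt; exact Hs | exact (sub_shiftt Hsub) | exact (dsubt HX (fun n => TVar (S n)))].
    - apply d_allWR; eapply (IH (psubw (fun n => WV (S n)) X) (map (@jshiftw D Fs Ps) G1) (wshift x)); [rewrite size_psubw; exact Hs | exact (sub_shiftw Hsub) | exact (dsubw HX (fun n => WV (S n)))].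
    - eapply d_allWL; eapply IH; eauto.
    - eapply d_exWR; eapply IH; eauto.
    - apply d_exWL; eapply (IH (psubw (fun n => WV (S n)) X) (map (@jshiftw D Fs Ps) G1) (wshift x)); [rewrite size_psubw; exact Hs | exact (sub_shiftw Hsub) | exact (dsubw HX (fun n => WV (S n)))].
    - eapply d_bangR; eapply IH; eauto.
    - apply d_bangL; eapply (IH X ((A,u)::G1) x); [exact Hs | apply sub_cons_swap; exact Hsub | exact (dweak HX (sub_wk _ _))].
    - eapply d_atR; eapply IH; eauto.
    - eapply d_atL; eapply IH; eauto.
    - eapply d_downR; eapply IH; eauto.
    - eapply d_downL; eapply IH; eauto.
Qed.

Lemma cut1_step : forall k, Cut1 k -> Cut2 k -> Cut1 (S k).
Proof.
  intros k H1 H2 A Hs G L1 u L2 L' C w d1 d2 Hms.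
  destruct (deriv_derivh d1) as [n1 h1]; destruct (deriv_derivh d2) as [n2 h2].
  eapply (cutH H1 H2 (N := n1 + n2)); [exact h1|exact h2|lia|exact Hs|exact Hms].
Qed.

Lemma cut_all : forall k, Cut1 k /\ Cut2 k.
Proof.
  induction k as [|k [H1 H2]].
  - split; intros A Hs; pose proof (size_pos A); lia.
  - assert (C1 : Cut1 (S k)) by (apply cut1_step; auto).
    split; auto.
    intros A Hs G2 L C w G1 u d2 Hsub d1. eapply cut2_aux; eauto.
Qed.
End HyLLCut.

Theorem theorem1 (D : cdomain) (Fs Ps : Type) :
  forall (G L L' : list (judg D Fs Ps)) (A C : prop D Fs Ps) (u w : wexp D),
    (deriv G L A u -> deriv G ((A, u) :: L') C w -> deriv G (L ++ L') C w) /\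
    (deriv G [] A u -> deriv ((A, u) :: G) L C w -> deriv G L C w).
Proof.
  intros G L L' A C u w.
  destruct (cut_all D Fs Ps (size A)) as [H1 H2].
  split; intros Ha Hb.
  - exact (H1 A (le_n _) G L u ((A, u) :: L') L' C w Ha Hb (ms_refl _)).
  - exact (H2 A (le_n _) ((A, u) :: G) L C w G u Hb (sub_refl _) Ha).
Qed.
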